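(* Let $G\equiv H$ be finitely generated nilpotent groups. Then $G_0\cong H_0$ for any addition $G_0$ of $G$ and any addition $H_0$ of $H$.
   Context: For a subgroup $N$ of $G$, $Is(N)=\{x\in G:\ x^k\in N\text{ for some integer }k\ge1\}$. With $I(G)=Is(G')\cap Z(G)$, an addition of $G$ is a subgroup $G_0\le Z(G)$ such that $Z(G)=G_0\times I(G)$. *)

(* Defs.v *)
From Stdlib Require Import List.

Record group := Group {
  carrier :> Type;
  gmul : carrier -> carrier -> carrier;
  gone : carrier;
  ginv : carrier -> carrier;
  gmulA : forall x y z, gmul x (gmul y z) = gmul (gmul x y) z;
  gmul1l : forall x, gmul gone x = x;
  gmulVl : forall x, gmul (ginv x) x = gone
}.

Arguments gmul {g}.
Arguments gone {g}.
Arguments ginv {g}.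

Section GroupDefs.
Variable G : group.

Definition gset := G -> Prop.

Definition subgroup (A : gset) : Prop :=
  A gone /\ (forall x y, A x -> A y -> A (gmul x y)) /\ (forall x, A x -> A (ginv x)).

Inductive gen (S : gset) : gset :=
  | gen_in : forall x, S x -> gen S x
  | gen_one : gen S gone
  | gen_mul : forall x y, gen S x -> gen S y -> gen S (gmul x y)
  | gen_inv : forall x, gen S x -> gen S (ginv x).

Definition fin_gen : Prop :=
  exists l : list G, forall x : G, gen (fun y => In y l) x.

Definition commutator (x y : G) : G := gmul (gmul (ginv x) (ginv y)) (gmul x y).

Definition comm_sub (A B : gset) : gset :=
  gen (fun z => exists a b, A a /\ B b /\ z = commutator a b).

(* lower central series: gamma 0 = G, gamma (n+1) = [gamma n, G] *)
Fixpoint lcs (n : nat) : gset :=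
  match n with
  | 0 => fun _ => True
  | S k => comm_sub (lcs k) (fun _ => True)
  end.

Definition nilpotent : Prop := exists n, forall x, lcs n x -> x = gone.

Definition derived : gset := comm_sub (fun _ => True) (fun _ => True).

Definition center : gset := fun z => forall x, gmul z x = gmul x z.

Fixpoint gpow (x : G) (k : nat) : G :=
  match k with
  | 0 => gone
  | S k => gmul (gpow x k) x
  end.

Definition isolator (N : gset) : gset :=
  fun x => exists k, 1 <= k /\ N (gpow x k).

Definition Iset : gset := fun x => isolator derived x /\ center x.

(* G0 is an addition of G: G0 <= Z(G) and Z(G) = G0 x I(G) (internal direct product) *)
Definition addition (G0 : gset) : Prop :=
  subgroup G0 /\ (forall x, G0 x -> center x) /\
  (forall x, G0 x -> Iset x -> x = gone) /\
  (forall z, center z <-> exists a b, G0 a /\ Iset b /\ z = gmul a b).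

End GroupDefs.

Definition iso_sub (G H : group) (A : gset G) (B : gset H) : Prop :=
  exists f : G -> H,
    (forall x, A x -> B (f x)) /\
    (forall x y, A x -> A y -> f (gmul x y) = gmul (f x) (f y)) /\
    (forall x y, A x -> A y -> f x = f y -> x = y) /\
    (forall y, B y -> exists x, A x /\ f x = y).

Inductive term :=
  | TVar : nat -> term
  | TOne : term
  | TMul : term -> term -> term
  | TInv : term -> term.

Inductive formula :=
  | FEq : term -> term -> formula
  | FFalse : formula
  | FNot : formula -> formula
  | FAnd : formula -> formula -> formula
  | FOr : formula -> formula -> formula
  | FImp : formula -> formula -> formula
  | FEx : nat -> formula -> formula
  | FAll : nat -> formula -> formula.

Fixpoint teval (G : group) (v : nat -> G) (t : term) : G :=
  match t with
  | TVar n => v n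
  | TOne => gone
  | TMul a b => gmul (teval G v a) (teval G v b)
  | TInv a => ginv (teval G v a)
  end.

Definition upd (G : group) (v : nat -> G) (n : nat) (a : G) : nat -> G :=
  fun m => if Nat.eqb m n then a else v m.

Fixpoint sat (G : group) (v : nat -> G) (phi : formula) : Prop :=
  match phi with
  | FEq a b => teval G v a = teval G v b
  | FFalse => False
  | FNot p => ~ sat G v p
  | FAnd p q => sat G v p /\ sat G v q
  | FOr p q => sat G v p \/ sat G v q
  | FImp p q => sat G v p -> sat G v q
  | FEx n p => exists a : G, sat G (upd G v n a) p
  | FAll n p => forall a : G, sat G (upd G v n a) p
  end.

Fixpoint tvar_in (x : nat) (t : term) : Prop :=
  match t with
  | TVar n => n = x
  | TOne => False
  | TMul a b => tvar_in x a \/ tvar_in x b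
  | TInv a => tvar_in x a
  end.

Fixpoint free_in (x : nat) (phi : formula) : Prop :=
  match phi with
  | FEq a b => tvar_in x a \/ tvar_in x b
  | FFalse => False
  | FNot p => free_in x p
  | FAnd p q | FOr p q | FImp p q => free_in x p \/ free_in x q
  | FEx n p | FAll n p => n <> x /\ free_in x p
  end.

Definition sentence (phi : formula) : Prop := forall x, ~ free_in x phi.

(* G ≡ H : elementary equivalence (same first-order sentences; groups are nonempty,
   so the valuation is irrelevant for sentences; we use the constant valuation at 1) *)
Definition elem_equiv (G H : group) : Prop :=
  forall phi, sentence phi -> (sat G (fun _ => gone) phi <-> sat H (fun _ => gone) phi).

(* Main.v *)
Require Import Defs.
From Stdlib Require Import List ZArith Lia Classical ClassicalEpsilon FunctionalExtensionality PropExtensionality Setoid Morphisms Permutation.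
Import ListNotations.

Section Basic.
Variable G : group.
Local Notation "x ** y" := (@gmul G x y) (at level 40, left associativity).
Local Notation "1" := (@gone G).

Lemma gmulV (x : G) : x ** ginv x = 1.
Proof.
  rewrite <- (gmul1l G (x ** ginv x)).
  rewrite <- (gmulVl G (ginv x)) at 1.
  rewrite <- gmulA. rewrite (gmulA _ (ginv x) x (ginv x)). rewrite gmulVl, gmul1l.
  apply gmulVl.
Qed.

Lemma gmul1r (x : G) : x ** 1 = x.
Proof. rewrite <- (gmulVl G x), gmulA, gmulV, gmul1l. reflexivity. Qed.

Lemma gmulKl (x y : G) : ginv x ** (x ** y) = y.
Proof. rewrite gmulA, gmulVl, gmul1l. reflexivity. Qed.
Lemma gmulKr (x y : G) : x ** (ginv x ** y) = y.
Proof. rewrite gmulA, gmulV, gmul1l. reflexivity. Qed.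

Lemma mul_eq1 (x y : G) : x ** y = 1 -> y = ginv x.
Proof. intro H. rewrite <- (gmulKl x y), H, gmul1r. reflexivity. Qed.

Lemma ginvK (x : G) : ginv (ginv x) = x.
Proof. symmetry. apply mul_eq1. apply gmulVl. Qed.

Lemma ginvM (x y : G) : ginv (x ** y) = ginv y ** ginv x.
Proof. symmetry. apply mul_eq1. rewrite <- gmulA, (gmulA _ y), gmulV, gmul1l, gmulV. reflexivity. Qed.

Lemma ginv1 : ginv (1) = 1.
Proof. symmetry. apply mul_eq1. apply gmul1l. Qed.

Lemma gmulA' (x y z : G) : x ** y ** z = x ** (y ** z).
Proof. rewrite gmulA. reflexivity. Qed.

End Basic.

Global Hint Rewrite gmulA' gmul1l gmul1r gmulVl gmulV ginvK ginvM ginv1 gmulKl gmulKr : gsimp.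
Ltac gsimpl := autorewrite with gsimp.
Tactic Notation "gsimpl" "in" hyp(H) := autorewrite with gsimp in H.

Section Basic2.
Variable G : group.
Local Notation "x ** y" := (@gmul G x y) (at level 40, left associativity).
Local Notation "1" := (@gone G).

Lemma gmul_cancel_l (a x y : G) : a ** x = a ** y -> x = y.
Proof. intro H. rewrite <- (gmulKl G a x), H. gsimpl. reflexivity. Qed.
Lemma gmul_cancel_r (a x y : G) : x ** a = y ** a -> x = y.
Proof. intro H. rewrite <- (gmul1r G x), <- (gmulV G a), gmulA, H. gsimpl. reflexivity. Qed.

Lemma eq_inv_mul (x y : G) : ginv x ** y = 1 -> x = y.
Proof. intro H. apply (gmul_cancel_l (ginv x)). rewrite H. gsimpl. reflexivity. Qed.


Lemma ginv_inj (x y : G) : ginv x = ginv y -> x = y.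
Proof. intro H. rewrite <- (ginvK G x), H, ginvK. reflexivity. Qed.

Definition conj (h x : G) := ginv h ** x ** h.

Lemma commE (x y : G) : commutator G x y = ginv x ** ginv y ** x ** y.
Proof. unfold commutator. gsimpl. reflexivity. Qed.

Lemma comm_mul_l (x y g : G) : commutator G (x ** y) g = conj y (commutator G x g) ** commutator G y g.
Proof. unfold commutator, conj. gsimpl. reflexivity. Qed.
Lemma comm_mul_r (x g h : G) : commutator G x (g ** h) = commutator G x h ** conj h (commutator G x g).
Proof. unfold commutator, conj. gsimpl. reflexivity. Qed.
Lemma comm_inv_l (x g : G) : commutator G (ginv x) g = conj (ginv x) (ginv (commutator G x g)).
Proof. unfold commutator, conj. gsimpl. reflexivity. Qed.
Lemma comm_inv_r (x g : G) : commutator G x (ginv g) = conj (ginv g) (ginv (commutator G x g)).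
Proof. unfold commutator, conj. gsimpl. reflexivity. Qed.
Lemma conj_comm (h a : G) : conj h a = a ** commutator G a h.
Proof. unfold commutator, conj. gsimpl. reflexivity. Qed.
End Basic2.

Section Pow.
Variable G : group.
Local Notation "x ** y" := (@gmul G x y) (at level 40, left associativity).
Local Notation "1" := (@gone G).

Definition gpowz (x : G) (z : Z) : G :=
  match z with
  | Z0 => 1
  | Zpos p => gpow G x (Pos.to_nat p)
  | Zneg p => ginv (gpow G x (Pos.to_nat p))
  end.

Lemma gpow_comm (x : G) n : gpow G x n ** x = x ** gpow G x n.
Proof. induction n; simpl; gsimpl; [reflexivity|]. rewrite gmulA, IHn, gmulA', IHn. reflexivity. Qed.

Lemma gpow_add (x : G) m n : gpow G x (m + n) = gpow G x m ** gpow G x n.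
Proof. induction n; simpl. rewrite Nat.add_0_r; gsimpl; auto. rewrite Nat.add_succ_r. simpl. rewrite IHn. gsimpl. reflexivity. Qed.

Lemma gpowz_nat (x : G) (n : nat) : gpowz x (Z.of_nat n) = gpow G x n.
Proof. destruct n; simpl; auto. rewrite SuccNat2Pos.id_succ. reflexivity. Qed.

Lemma gpowz_nat_opp (x : G) (n : nat) : gpowz x (- Z.of_nat n) = ginv (gpow G x n).
Proof. destruct n; simpl. symmetry; apply ginv1. rewrite SuccNat2Pos.id_succ. reflexivity. Qed.

Lemma gpowz_succ (x : G) z : gpowz x (z + 1) = gpowz x z ** x.
Proof.
  destruct (Z_le_gt_dec 0 z).
  - rewrite <- (Z2Nat.id z) by lia.
    replace (Z.of_nat (Z.to_nat z) + 1)%Z with (Z.of_nat (S (Z.to_nat z))) by lia.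
    rewrite !gpowz_nat. reflexivity.
  - replace z with (- Z.of_nat (S (Z.to_nat (- z - 1))))%Z by lia.
    replace (- Z.of_nat (S (Z.to_nat (- z - 1))) + 1)%Z with (- Z.of_nat (Z.to_nat (- z - 1)))%Z by lia.
    rewrite !gpowz_nat_opp. simpl. rewrite gpow_comm. gsimpl. reflexivity.
Qed.

Lemma gpowz_pred (x : G) z : gpowz x (z - 1) = gpowz x z ** ginv x.
Proof. replace z with ((z - 1) + 1)%Z at 2 by lia. rewrite gpowz_succ. gsimpl. reflexivity. Qed.

Lemma gpowz_add (x : G) a b : gpowz x (a + b) = gpowz x a ** gpowz x b.
Proof.
  induction b using Z.peano_ind.
  - rewrite Z.add_0_r. simpl. gsimpl. reflexivity.
  - rewrite <- Z.add_1_r, Z.add_assoc, !gpowz_succ, IHb. gsimpl. reflexivity.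
  - rewrite <- Z.sub_1_r. replace (a + (b - 1))%Z with ((a + b) - 1)%Z by lia.
    rewrite !gpowz_pred, IHb. gsimpl. reflexivity.
Qed.

Lemma gpowz0 (x : G) : gpowz x 0 = 1.
Proof. reflexivity. Qed.
Lemma gpowz1 (x : G) : gpowz x 1 = x.
Proof. simpl. gsimpl. reflexivity. Qed.

Lemma gpowz_opp (x : G) a : gpowz x (- a) = ginv (gpowz x a).
Proof. apply mul_eq1. rewrite <- gpowz_add. rewrite Z.add_opp_diag_r. reflexivity. Qed.

Lemma gpowz_mul (x : G) a b : gpowz x (a * b) = gpowz (gpowz x a) b.
Proof.
  induction b using Z.peano_ind.
  - rewrite Z.mul_0_r. reflexivity.
  - rewrite <- Z.add_1_r, Z.mul_add_distr_l, Z.mul_1_r, gpowz_add, gpowz_succ, IHb. reflexivity.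
  - rewrite <- Z.sub_1_r, Z.mul_sub_distr_l, Z.mul_1_r.
    replace (a * b - a)%Z with (a * b + - a)%Z by lia.
    rewrite gpowz_add, gpowz_pred, IHb, gpowz_opp. reflexivity.
Qed.

Lemma gpowz_one a : gpowz 1 a = 1.
Proof.
  induction a using Z.peano_ind; auto.
  - rewrite <- Z.add_1_r, gpowz_succ, IHa. gsimpl. auto.
  - rewrite <- Z.sub_1_r, gpowz_pred, IHa. gsimpl. auto.
Qed.

Definition commute (x y : G) := x ** y = y ** x.

Lemma commute_sym x y : commute x y -> commute y x.
Proof. unfold commute; auto. Qed.
Lemma commute_mul_r x y z : commute x y -> commute x z -> commute x (y ** z).
Proof. unfold commute; intros. rewrite gmulA, H, <- gmulA, H0, gmulA. auto. Qed.
Lemma commute_inv_r x y : commute x y -> commute x (ginv y).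
Proof. unfold commute; intros. apply (gmul_cancel_l _ y). rewrite gmulA, <- H. rewrite <- gmulA. gsimpl. auto. Qed.
Lemma commute_one_r x : commute x 1.
Proof. unfold commute; gsimpl; auto. Qed.
Lemma commute_gpowz_r x y a : commute x y -> commute x (gpowz y a).
Proof.
  intro H. induction a using Z.peano_ind.
  - apply commute_one_r.
  - rewrite <- Z.add_1_r, gpowz_succ. apply commute_mul_r; auto.
  - rewrite <- Z.sub_1_r, gpowz_pred. apply commute_mul_r; auto. apply commute_inv_r; auto.
Qed.
Lemma commute_gpowz x y a b : commute x y -> commute (gpowz x a) (gpowz y b).
Proof. intro. apply commute_gpowz_r. apply commute_sym, commute_gpowz_r, commute_sym; auto. Qed.
Lemma commute_refl x : commute x x.
Proof. unfold commute; auto. Qed.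

Lemma gpowz_mul_comm x y a : commute x y -> gpowz (x ** y) a = gpowz x a ** gpowz y a.
Proof.
  intro H. induction a using Z.peano_ind.
  - simpl. gsimpl. auto.
  - rewrite <- Z.add_1_r, !gpowz_succ, IHa.
    assert (commute (gpowz y a) x) by (apply commute_sym, commute_gpowz_r; auto).
    unfold commute in H0. rewrite !gmulA'. f_equal. rewrite !gmulA, H0. auto.
  - rewrite <- Z.sub_1_r, !gpowz_pred, IHa.
    assert (commute (gpowz y a) (ginv x)) by (apply commute_inv_r, commute_sym, commute_gpowz_r; auto).
    unfold commute in H0. rewrite H. gsimpl. f_equal. rewrite !gmulA, H0. auto.
Qed.

Lemma gpowz_inv x a : gpowz (ginv x) a = ginv (gpowz x a).
Proof.
  rewrite <- gpowz_opp. replace (- a)%Z with (-1 * a)%Z by lia. rewrite gpowz_mul.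
  simpl. gsimpl. auto.
Qed.

Definition central (x : G) := forall y, x ** y = y ** x.
Lemma central_commute x y : central x -> commute x y.
Proof. intro H; apply H. Qed.
Lemma central_mul x y : central x -> central y -> central (x ** y).
Proof. intros Hx Hy z. apply commute_sym. apply commute_mul_r; apply commute_sym; [apply Hx|apply Hy]. Qed.
Lemma central_inv x : central x -> central (ginv x).
Proof. intros Hx z. apply commute_sym. apply commute_inv_r. apply commute_sym. apply Hx. Qed.
Lemma central_one : central 1.
Proof. intro z. gsimpl. auto. Qed.
Lemma central_gpowz x a : central x -> central (gpowz x a).
Proof. intros Hx z. apply commute_sym. apply commute_gpowz_r. apply commute_sym. apply Hx. Qed.

Lemma subgroup_one (S : gset G) : subgroup G S -> S 1.
Proof. intros [? ?]; auto. Qed.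
Lemma subgroup_mul (S : gset G) x y : subgroup G S -> S x -> S y -> S (x ** y).
Proof. intros [? [? ?]]; auto. Qed.
Lemma subgroup_inv (S : gset G) x : subgroup G S -> S x -> S (ginv x).
Proof. intros [? [? ?]]; auto. Qed.
Lemma subgroup_inv_iff (S : gset G) x : subgroup G S -> S (ginv x) -> S x.
Proof. intros HS H. rewrite <- (ginvK G x). apply subgroup_inv; auto. Qed.
Lemma subgroup_gpowz (S : gset G) x a : subgroup G S -> S x -> S (gpowz x a).
Proof.
  intros HS Hx. induction a using Z.peano_ind.
  - exact (subgroup_one S HS).
  - rewrite <- Z.add_1_r, gpowz_succ. apply subgroup_mul; auto.
  - rewrite <- Z.sub_1_r, gpowz_pred. apply subgroup_mul; auto. apply subgroup_inv; auto.
Qed.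
Lemma subgroup_gpow (S : gset G) x n : subgroup G S -> S x -> S (gpow G x n).
Proof. intros. rewrite <- gpowz_nat. apply subgroup_gpowz; auto. Qed.

Lemma gen_subgroup (S : gset G) : subgroup G (gen G S).
Proof. split; [|split]; intros. apply gen_one. apply gen_mul; auto. apply gen_inv; auto. Qed.
Lemma gen_min (S T : gset G) : subgroup G T -> (forall x, S x -> T x) -> forall x, gen G S x -> T x.
Proof.
  intros HT HST x Hx. induction Hx.
  - auto.
  - apply subgroup_one; auto.
  - apply subgroup_mul; auto.
  - apply subgroup_inv; auto.
Qed.
Lemma gen_mono (S T : gset G) : (forall x, S x -> T x) -> forall x, gen G S x -> gen G T x.
Proof. intros H x. apply gen_min. apply gen_subgroup. intros; apply gen_in; auto. Qed.

Lemma subgroup_True : subgroup G (fun _ => True).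
Proof. split; auto. Qed.
Lemma subgroup_and (S T : gset G) : subgroup G S -> subgroup G T -> subgroup G (fun x => S x /\ T x).
Proof. intros HS HT. split; [|split]; intros; repeat split; try apply subgroup_one; try apply subgroup_mul; try apply subgroup_inv; tauto. Qed.

End Pow.
Arguments conj {G}.
Arguments gpowz {G}.
Arguments commute {G}.
Arguments central {G}.

Definition normal (G : group) (N : gset G) :=
  subgroup G N /\ forall h x, N x -> N (conj h x).

Lemma Zsub_cyclic (T : Z -> Prop) :
  T 0%Z -> (forall a b, T a -> T b -> T (a + b)%Z) -> (forall a, T a -> T (- a)%Z) ->
  exists d, T d /\ forall k, T k -> exists q, k = (q * d)%Z.
Proof.
  intros T0 Tadd Topp.
  assert (Tmul : forall d q, T d -> T (q * d)%Z).
  { intros d q Hd. induction q using Z.peano_ind.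
    - auto.
    - replace (Z.succ q * d)%Z with (q * d + d)%Z by lia. auto.
    - replace (Z.pred q * d)%Z with (q * d + - d)%Z by lia. auto. }
  destruct (classic (exists k, T k /\ k <> 0%Z)) as [[k [Hk Hk0]]|Hno].
  - assert (exists n : nat, T (Z.of_nat (S n))) as [n Hn].
    { destruct (Z_lt_le_dec 0 k).
      - exists (pred (Z.to_nat k)). replace (Z.of_nat (S (pred (Z.to_nat k)))) with k by lia. auto.
      - exists (pred (Z.to_nat (- k))). replace (Z.of_nat (S (pred (Z.to_nat (- k))))) with (- k)%Z by lia. auto. }
    assert (Hmin : exists d : nat, T (Z.of_nat (S d)) /\ forall m, m < d -> ~ T (Z.of_nat (S m))).
    { revert Hn. induction n as [n IH] using (well_founded_induction Wf_nat.lt_wf). intro Hn.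
      destruct (classic (exists m, m < n /\ T (Z.of_nat (S m)))) as [[m [Hm HTm]]|Hnm].
      - apply (IH m Hm HTm).
      - exists n. split; auto. intros m Hm HT. apply Hnm. eauto. }
    destruct Hmin as [d [Hd Hdmin]].
    exists (Z.of_nat (S d)). split; auto.
    intros j Hj. exists (j / Z.of_nat (S d))%Z.
    pose proof (Z.div_mod j (Z.of_nat (S d))) as E.
    pose proof (Z.mod_pos_bound j (Z.of_nat (S d))) as B.
    assert (Hr : T (j mod Z.of_nat (S d))%Z).
    { replace (j mod Z.of_nat (S d))%Z with (j + - (j / Z.of_nat (S d) * Z.of_nat (S d)))%Z.
      apply Tadd; auto. rewrite E at 1 by lia. lia. }
    destruct (Z.eq_dec (j mod Z.of_nat (S d)) 0) as [E0|E0].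
    + rewrite E at 1 by lia. rewrite E0. lia.
    + exfalso. apply (Hdmin (pred (Z.to_nat (j mod Z.of_nat (S d))))).
      * assert (j mod Z.of_nat (S d) < Z.of_nat (S d))%Z by (apply B; lia). lia.
      * replace (Z.of_nat (S (pred (Z.to_nat (j mod Z.of_nat (S d)))))) with (j mod Z.of_nat (S d))%Z; auto.
        assert (0 <= j mod Z.of_nat (S d))%Z by (apply B; lia). lia.
  - exists 0%Z. split; auto. intros k Hk. exists 0%Z.
    destruct (Z.eq_dec k 0); [lia|]. exfalso; eauto.
Qed.

Section Cong.
Variable G : group.
Local Notation "x ** y" := (@gmul G x y) (at level 40, left associativity).
Local Notation "1" := (@gone G).
Variable N : gset G.
Hypothesis HN : normal G N.

Definition cong (x y : G) := N (ginv x ** y).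

Lemma HNsub : subgroup G N. Proof. apply HN. Qed.

Lemma cong_refl x : cong x x.
Proof. unfold cong. gsimpl. apply subgroup_one, HNsub. Qed.
Lemma cong_sym x y : cong x y -> cong y x.
Proof. unfold cong. intro H. apply subgroup_inv in H; [|apply HNsub]. gsimpl. gsimpl in H. auto. Qed.
Lemma cong_trans x y z : cong x y -> cong y z -> cong x z.
Proof. unfold cong. intros H1 H2. pose proof (subgroup_mul _ _ _ _ HNsub H1 H2). gsimpl in H. auto. Qed.

Global Instance cong_Equiv : Equivalence cong.
Proof. split; red; eauto using cong_refl, cong_sym, cong_trans. Qed.

Lemma N_conj h x : N x -> N (conj h x).
Proof. apply HN. Qed.

Global Instance gmul_Proper : Proper (cong ==> cong ==> cong) (@gmul G).
Proof.
  intros x x' Hx y y' Hy. unfold cong in *.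
  replace (ginv (x ** y) ** (x' ** y')) with (conj y (ginv x ** x') ** (ginv y ** y')).
  apply subgroup_mul; auto using HNsub, N_conj.
  unfold conj. gsimpl. auto.
Qed.

Global Instance ginv_Proper : Proper (cong ==> cong) (@ginv G).
Proof.
  intros x x' Hx. unfold cong in *.
  replace (ginv (ginv x) ** ginv x') with (ginv (conj (ginv x) (ginv x ** x'))).
  apply subgroup_inv; auto using HNsub, N_conj.
  unfold conj. gsimpl. auto.
Qed.

Global Instance gpowz_Proper : Proper (cong ==> eq ==> cong) (@gpowz G).
Proof.
  intros x x' Hx a a' <-. induction a using Z.peano_ind.
  - reflexivity.
  - rewrite <- Z.add_1_r, !gpowz_succ. rewrite IHa, Hx. reflexivity.
  - rewrite <- Z.sub_1_r, !gpowz_pred. rewrite IHa, Hx. reflexivity.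
Qed.

Lemma cong_eq x y : x = y -> cong x y.
Proof. intros ->. reflexivity. Qed.

Lemma cong_N x : N x -> cong 1 x.
Proof. unfold cong. gsimpl. auto. Qed.
Lemma cong_N' x : cong 1 x -> N x.
Proof. unfold cong. gsimpl. auto. Qed.

Definition cmod (a : G) := forall x, cong (a ** x) (x ** a).

Lemma cmod_comm a : (forall x, N (commutator G a x)) -> cmod a.
Proof.
  intros H x. unfold cong. specialize (H x).
  replace (ginv (a ** x) ** (x ** a)) with (ginv (commutator G a x)).
  apply subgroup_inv; auto using HNsub.
  unfold commutator. gsimpl. auto.
Qed.

Lemma cmod_mul a b : cmod a -> cmod b -> cmod (a ** b).
Proof.
  intros Ha Hb x. transitivity (a ** (b ** x)). gsimpl; reflexivity.
  rewrite (Hb x). transitivity ((a ** x) ** b). gsimpl; reflexivity.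
  rewrite (Ha x). gsimpl. reflexivity.
Qed.
Lemma cmod_one : cmod 1.
Proof. intro x. gsimpl. reflexivity. Qed.
Lemma cmod_inv a : cmod a -> cmod (ginv a).
Proof.
  intros Ha x. 
  transitivity (ginv a ** (x ** a) ** ginv a). gsimpl. reflexivity.
  rewrite <- (Ha x). gsimpl. reflexivity.
Qed.
Lemma cmod_gpowz a k : cmod a -> cmod (gpowz a k).
Proof.
  intro Ha. induction k using Z.peano_ind.
  - apply cmod_one.
  - rewrite <- Z.add_1_r, gpowz_succ. apply cmod_mul; auto.
  - rewrite <- Z.sub_1_r, gpowz_pred. apply cmod_mul; auto. apply cmod_inv; auto.
Qed.

Lemma cmod_gpowz_mul a b k : cmod a -> cong (gpowz (a ** b) k) (gpowz a k ** gpowz b k).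
Proof.
  intro Ha. induction k using Z.peano_ind.
  - simpl. gsimpl. reflexivity.
  - rewrite <- Z.add_1_r, !gpowz_succ, IHk.
    transitivity (gpowz a k ** (gpowz b k ** a) ** b). gsimpl; reflexivity.
    rewrite <- (Ha (gpowz b k)). gsimpl. reflexivity.
  - rewrite <- Z.sub_1_r, !gpowz_pred, IHk.
    transitivity (gpowz a k ** ((gpowz b k ** ginv b) ** ginv a)). gsimpl; reflexivity.
    rewrite <- (cmod_inv a Ha (gpowz b k ** ginv b)). gsimpl. reflexivity.
Qed.

Definition inL (l : list G) : gset G := fun y => In y l.
Definition Pmod (M : list G) (x : G) := exists y, gen G (inL M) y /\ cong y x.

Lemma Pmod_subgroup M : subgroup G (Pmod M).
Proof.
  split; [|split].
  - exists 1. split. apply gen_one. reflexivity.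
  - intros x y [x' [Hx Ex]] [y' [Hy Ey]]. exists (x' ** y'). split. apply gen_mul; auto.
    rewrite Ex, Ey. reflexivity.
  - intros x [x' [Hx Ex]]. exists (ginv x'). split. apply gen_inv; auto. rewrite Ex. reflexivity.
Qed.

Lemma Pmod_gen M x : gen G (inL M) x -> Pmod M x.
Proof. intro H. exists x. split; auto. reflexivity. Qed.

Lemma Pmod_cong M x x' : Pmod M x -> cong x x' -> Pmod M x'.
Proof. intros [y [Hy E]] E'. exists y. split; auto. rewrite E; auto. Qed.

Lemma Pmod_mono M M' : incl M M' -> forall x, Pmod M x -> Pmod M' x.
Proof.
  intros Hinc x [y [Hy E]]. exists y. split; auto.
  revert Hy. apply gen_mono. intros z Hz. apply Hinc. auto.
Qed.

Lemma decomp a M' y : cmod a -> gen G (inL (a :: M')) y ->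
  exists k y', gen G (inL M') y' /\ cong y (gpowz a k ** y').
Proof.
  intros Ha Hy. induction Hy as [x Hx| |x z _ [k [y' [H1 E1]]] _ [l [y'' [H2 E2]]]|x _ [k [y' [H1 E1]]]].
  - destruct Hx as [<-|Hx].
    + exists 1%Z, 1. split. apply gen_one. rewrite gpowz1. gsimpl. reflexivity.
    + exists 0%Z, x. split. apply gen_in; auto. simpl. gsimpl. reflexivity.
  - exists 0%Z, 1. split. apply gen_one. simpl. gsimpl. reflexivity.
  - exists (k + l)%Z, (y' ** y''). split. apply gen_mul; auto.
    rewrite E1, E2, gpowz_add.
    transitivity (gpowz a k ** (y' ** gpowz a l) ** y''). gsimpl; reflexivity.
    rewrite <- (cmod_gpowz a l Ha y'). gsimpl. reflexivity.
  - exists (- k)%Z, (ginv y'). split. apply gen_inv; auto.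
    rewrite E1, gpowz_opp. gsimpl.
    rewrite <- (cmod_inv _ (cmod_gpowz a k Ha) (ginv y')). reflexivity.
Qed.

Lemma noeth_rel (M : list G) : (forall m, In m M -> cmod m) ->
  forall K : gset G, subgroup G K -> (forall x, K x -> Pmod M x) ->
  exists L, (forall l, In l L -> K l) /\ forall x, K x -> Pmod L x.
Proof.
  induction M as [|a M' IH]; intros HM K HK HKM.
  - exists []. split. intros l []. auto.
  - assert (Ha : cmod a) by (apply HM; left; auto).
    set (T := fun k => exists s y', K s /\ gen G (inL M') y' /\ cong s (gpowz a k ** y')).
    destruct (Zsub_cyclic T) as [d [[s0 [y0 [Hs0 [Hy0 Es0]]]] Hd]].
    + exists 1, 1. split. apply subgroup_one; auto. split. apply gen_one. simpl; gsimpl; reflexivity.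
    + intros k l [s [y' [Hs [Hy' Es]]]] [t [y'' [Ht [Hy'' Et]]]].
      exists (s ** t), (y' ** y''). split. apply subgroup_mul; auto. split. apply gen_mul; auto.
      rewrite Es, Et, gpowz_add.
      transitivity (gpowz a k ** (y' ** gpowz a l) ** y''). gsimpl; reflexivity.
      rewrite <- (cmod_gpowz a l Ha y'). gsimpl. reflexivity.
    + intros k [s [y' [Hs [Hy' Es]]]]. exists (ginv s), (ginv y'). split. apply subgroup_inv; auto.
      split. apply gen_inv; auto. rewrite Es, gpowz_opp. gsimpl.
      rewrite <- (cmod_inv _ (cmod_gpowz a k Ha) (ginv y')). reflexivity.
    + set (K' := fun x => K x /\ Pmod M' x).
      destruct (IH (fun m Hm => HM m (or_intror Hm)) K') as [L' [HL'1 HL'2]].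
      { apply subgroup_and; auto. apply Pmod_subgroup. }
      { intros x [_ Hx]; auto. }
      exists (s0 :: L'). split.
      * intros l [<-|Hl]; auto. apply HL'1; auto.
      * intros s Hs. destruct (HKM s Hs) as [y [Hy Ey]].
        destruct (decomp a M' y Ha Hy) as [k [y' [Hy' Ey']]].
        destruct (Hd k) as [q Hq].
        { exists s, y'. split; auto. split; auto. rewrite <- Ey, Ey'. reflexivity. }
        set (t := ginv (gpowz s0 q) ** s).
        assert (Ht : K' t).
        { split. apply subgroup_mul; auto. apply subgroup_inv; auto. apply subgroup_gpowz; auto.
          apply (Pmod_cong M' (ginv (gpowz y0 q) ** y')).
          - apply Pmod_gen. apply gen_mul; auto. apply gen_inv. apply subgroup_gpowz; auto using gen_subgroup.
          - unfold t. rewrite <- Ey, Ey', Es0, Hq.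
            rewrite (cmod_gpowz_mul (gpowz a d) y0 q (cmod_gpowz a d Ha)).
            rewrite (Z.mul_comm q d), gpowz_mul. gsimpl. reflexivity. }
        destruct (HL'2 t Ht) as [z [Hz Ez]].
        exists (gpowz s0 q ** z). split.
        -- apply gen_mul. apply subgroup_gpowz. apply gen_subgroup. apply gen_in. left; auto.
           revert Hz. apply gen_mono. intros w Hw. right; auto.
        -- rewrite Ez. unfold t. gsimpl. reflexivity.
Qed.

End Cong.

Section LCS.
Variable G : group.
Local Notation "x ** y" := (@gmul G x y) (at level 40, left associativity).
Local Notation "1" := (@gone G).
Implicit Types (a b c h m x y z : G).

Lemma lcs_subgroup i : subgroup G (lcs G i).
Proof. destruct i; simpl. apply subgroup_True. apply gen_subgroup. Qed.

Lemma conj_commutator h a b : conj h (commutator G a b) = commutator G (conj h a) (conj h b).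
Proof. unfold conj, commutator. gsimpl. auto. Qed.
Lemma conj_mul h a b : conj h (a ** b) = conj h a ** conj h b.
Proof. unfold conj. gsimpl. auto. Qed.
Lemma conj_inv h a : conj h (ginv a) = ginv (conj h a).
Proof. unfold conj. gsimpl. auto. Qed.
Lemma conj_one h : conj h 1 = 1.
Proof. unfold conj. gsimpl. auto. Qed.

Lemma lcs_normal i : normal G (lcs G i).
Proof.
  split. apply lcs_subgroup.
  induction i; intros h x Hx; simpl in *; auto.
  induction Hx as [x [a [b [Ha [_ ->]]]]| |x y _ IHx _ IHy|x _ IHx].
  - apply gen_in. exists (conj h a), (conj h b). repeat split; auto. apply conj_commutator.
  - rewrite conj_one. apply gen_one.
  - rewrite conj_mul. apply gen_mul; auto.
  - rewrite conj_inv. apply gen_inv; auto.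
Qed.

Lemma lcs_comm i a b : lcs G i a -> lcs G (S i) (commutator G a b).
Proof. intro H. simpl. apply gen_in. exists a, b. auto. Qed.

Lemma lcs_dec i x : lcs G (S i) x -> lcs G i x.
Proof.
  simpl. apply gen_min. apply lcs_subgroup.
  intros y [a [b [Ha [_ ->]]]].
  replace (commutator G a b) with (ginv a ** conj b a).
  apply subgroup_mul. apply lcs_subgroup. apply subgroup_inv; auto. apply lcs_subgroup.
  apply lcs_normal; auto.
  unfold conj, commutator. gsimpl. auto.
Qed.

Lemma lcs_cmod i m : lcs G i m -> cmod G (lcs G (S i)) m.
Proof. intro H. apply cmod_comm. apply lcs_normal. intro x. apply lcs_comm; auto. Qed.

Lemma lcs_conj_cong i h c : lcs G (S i) c -> cong G (lcs G (S (S i))) c (conj h c).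
Proof. intro H. unfold cong. rewrite conj_comm. gsimpl. apply lcs_comm; auto. Qed.

Variable gens : list G.
Hypothesis Hgens : forall x, gen G (inL G gens) x.

Fixpoint Mlist (i : nat) : list G :=
  match i with
  | 0 => gens
  | S i => flat_map (fun m => map (fun g => commutator G m g) gens) (Mlist i)
  end.

Lemma Mlist_lcs i m : In m (Mlist i) -> lcs G i m.
Proof.
  revert m; induction i; intros m Hm; simpl in *; auto.
  apply in_flat_map in Hm. destruct Hm as [m' [Hm' Hin]]. apply in_map_iff in Hin.
  destruct Hin as [g [<- _]]. apply lcs_comm. auto.
Qed.

Lemma gen_Mlist_lcs i y : gen G (inL G (Mlist i)) y -> lcs G i y.
Proof. apply gen_min. apply lcs_subgroup. intros; apply Mlist_lcs; auto. Qed.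

Lemma lcs_Pmod i x : lcs G i x -> Pmod G (lcs G (S i)) (Mlist i) x.
Proof.
  revert x. induction i; intros x Hx.
  - apply (Pmod_gen G _ (lcs_normal 1)). apply Hgens.
  - set (N := lcs G (S (S i))).
    assert (HN : normal G N) by apply lcs_normal.
    assert (HP := Pmod_subgroup G N HN (Mlist (S i))).
    simpl in Hx. revert Hx. apply gen_min; auto.
    intros z [a [b [Ha [_ ->]]]].
    assert (Hyb : forall y b, gen G (inL G (Mlist i)) y -> Pmod G N (Mlist (S i)) (commutator G y b)).
    { intros y b0 Hy. revert b0. induction Hy as [m Hm| |y1 y2 Hy1 IH1 Hy2 IH2|y1 Hy1 IH1]; intro b0.
      - assert (Hb := Hgens b0). induction Hb as [g Hg| |b1 b2 _ IHb1 _ IHb2|b1 _ IHb1].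
        + apply (Pmod_gen G N HN). apply gen_in. unfold inL. simpl. apply in_flat_map. exists m. split; auto.
          apply in_map_iff. exists g; auto.
        + replace (commutator G m 1) with 1 by (unfold commutator; gsimpl; auto). apply subgroup_one; auto.
        + rewrite comm_mul_r. apply subgroup_mul; auto.
          apply (Pmod_cong G N HN _ (commutator G m b1)); auto.
          apply lcs_conj_cong. apply lcs_comm. apply Mlist_lcs; auto.
        + rewrite comm_inv_r. apply (Pmod_cong G N HN _ (ginv (commutator G m b1))).
          apply subgroup_inv; auto.
          apply lcs_conj_cong. apply subgroup_inv. apply lcs_subgroup. apply lcs_comm. apply Mlist_lcs; auto.
      - replace (commutator G 1 b0) with 1 by (unfold commutator; gsimpl; auto). apply subgroup_one; auto.
      - rewrite comm_mul_l. apply subgroup_mul; auto.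
        apply (Pmod_cong G N HN _ (commutator G y1 b0)); auto.
        apply lcs_conj_cong. apply lcs_comm. apply gen_Mlist_lcs; auto.
      - rewrite comm_inv_l. apply (Pmod_cong G N HN _ (ginv (commutator G y1 b0))).
        apply subgroup_inv; auto.
        apply lcs_conj_cong. apply subgroup_inv. apply lcs_subgroup. apply lcs_comm. apply gen_Mlist_lcs; auto. }
    destruct (IHi a Ha) as [y [Hy Ey]].
    apply (Pmod_cong G N HN _ (commutator G y b)); auto.
    unfold cong in Ey.
    set (n := ginv y ** a) in *.
    replace a with (y ** n) by (unfold n; gsimpl; auto).
    rewrite comm_mul_l.
    unfold cong. 
    replace (ginv (commutator G y b) ** (conj n (commutator G y b) ** commutator G n b))
      with (ginv (commutator G y b) ** conj n (commutator G y b) ** commutator G n b) by (gsimpl; auto).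
    apply subgroup_mul. apply lcs_subgroup.
    + apply lcs_conj_cong. apply lcs_comm. apply gen_Mlist_lcs; auto.
    + apply lcs_comm. auto.
Qed.

End LCS.

Theorem fg_nilp_noeth (G : group) : fin_gen G -> nilpotent G ->
  forall K : gset G, subgroup G K ->
  exists L, (forall l, In l L -> K l) /\ forall x, K x -> gen G (inL G L) x.
Proof.
  intros [gens Hgens] [c Hc] K HK.
  assert (Claim : forall m, m <= c -> exists U, (forall u, In u U -> K u) /\
     forall x, K x -> lcs G (c - m) x -> gen G (inL G U) x).
  { induction m; intro Hm.
    - exists []. split. intros u []. intros x _ Hx. rewrite Nat.sub_0_r in Hx. rewrite (Hc x Hx). apply gen_one.
    - destruct (IHm ltac:(lia)) as [U [HU1 HU2]].
      set (j := c - S m). assert (Ej : c - m = S j) by (unfold j; lia).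
      rewrite Ej in HU2.
      destruct (noeth_rel G (lcs G (S j)) (lcs_normal G (S j)) (Mlist G gens j))
        with (K := fun x => K x /\ lcs G j x) as [L [HL1 HL2]].
      + intros mm Hmm. apply lcs_cmod. apply (Mlist_lcs G gens); auto.
      + apply subgroup_and; auto. apply lcs_subgroup.
      + intros x [_ Hx]. apply (lcs_Pmod G gens Hgens); auto.
      + exists (L ++ U). split.
        * intros u Hu. apply in_app_or in Hu. destruct Hu; [apply HL1|apply HU1]; auto.
        * intros x Kx Hx. destruct (HL2 x (Logic.conj Kx Hx)) as [y [Hy Ey]].
          assert (Ky : K y /\ lcs G j y).
          { revert Hy. apply (gen_min G (inL G L) (fun z => K z /\ lcs G j z)). apply subgroup_and; auto. apply lcs_subgroup. auto. }
          replace x with (gmul y (gmul (ginv y) x)) by (gsimpl; auto).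
          apply gen_mul.
          -- revert Hy. apply gen_mono. intros z Hz. apply in_or_app. left; auto.
          -- assert (gen G (inL G U) (gmul (ginv y) x)).
             { apply HU2. apply subgroup_mul; auto. apply subgroup_inv; auto. apply Ky. apply Ey. }
             revert H. apply gen_mono. intros z Hz. apply in_or_app. right; auto. }
  destruct (Claim c (le_n c)) as [U [HU1 HU2]]. exists U. split; auto.
  intros x Hx. apply HU2; auto. rewrite Nat.sub_diag. simpl. auto.
Qed.

Fixpoint vadd (c d : list Z) : list Z :=
  match c, d with
  | x :: c', y :: d' => (x + y)%Z :: vadd c' d'
  | _, _ => []
  end.

Lemma vadd_length c d : length c = length d -> length (vadd c d) = length c.
Proof. revert d; induction c; destruct d; simpl; intros; try lia. rewrite IHc; lia. Qed.

Lemma map_fst_combine {A B : Type} (l : list A) (c : list B) : length l = length c -> map fst (combine l c) = l.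
Proof. revert c; induction l; destruct c; simpl; intros; try lia; auto. f_equal. auto. Qed.

Section Lin.
Variable G : group.
Local Notation "x ** y" := (@gmul G x y) (at level 40, left associativity).
Local Notation "1" := (@gone G).
Implicit Types (a b x y z : G) (l : list G) (p : list (G * Z)) (c d : list Z).

Definition lin p : G := fold_right (fun q acc => gpowz (fst q) (snd q) ** acc) 1 p.
Definition allc l := forall y, In y l -> central y.

Lemma lin_nil : lin [] = 1. Proof. reflexivity. Qed.
Lemma lin_cons a k p : lin ((a, k) :: p) = gpowz a k ** lin p. Proof. reflexivity. Qed.

Lemma lin_central p : allc (map fst p) -> central (lin p).
Proof.
  induction p as [|[a k] p IH]; intro H; simpl.
  - apply central_one.
  - apply central_mul. apply central_gpowz. apply H; simpl; auto.
    apply IH. intros y Hy; apply H; simpl; auto.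
Qed.

Lemma lin_app p q : lin (p ++ q) = lin p ** lin q.
Proof. induction p as [|[a k] p IH]; simpl. gsimpl; auto. rewrite IH. gsimpl. auto. Qed.

Lemma lin_perm p q : Permutation p q -> allc (map fst p) -> lin p = lin q.
Proof.
  intros Hp; induction Hp; intro Hc; simpl; auto.
  - f_equal. apply IHHp. intros y Hy; apply Hc; simpl; auto.
  - rewrite !gmulA. f_equal. apply central_gpowz. apply Hc. simpl. auto.
  - rewrite IHHp1; auto. apply IHHp2.
    intros z Hz. apply Hc. apply (Permutation_in (l := map fst l')). apply Permutation_map. symmetry; auto. auto.
Qed.

Lemma allc_combine l c : allc l -> allc (map fst (combine l c)).
Proof. intros H y Hy. apply in_map_iff in Hy. destruct Hy as [[a k] [<- Hin]]. apply in_combine_l in Hin. apply H; auto. Qed.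

Definition inL' l : gset G := inL G l.

Lemma gen_sub l1 l2 : (forall y, In y l1 -> gen G (inL G l2) y) -> forall x, gen G (inL G l1) x -> gen G (inL G l2) x.
Proof. intro H. apply gen_min. apply gen_subgroup. auto. Qed.

Lemma gen_incl l1 l2 : incl l1 l2 -> forall x, gen G (inL G l1) x -> gen G (inL G l2) x.
Proof. intro H. apply gen_mono. intros y Hy. apply H. auto. Qed.

Lemma gen_perm l1 l2 : Permutation l1 l2 -> forall x, gen G (inL G l1) x -> gen G (inL G l2) x.
Proof. intro H. apply gen_incl. intros y Hy. eapply Permutation_in; eauto. Qed.

Lemma lin_gen l c : gen G (inL G l) (lin (combine l c)).
Proof.
  revert c; induction l as [|a l IH]; destruct c; simpl; try apply gen_one.
  apply gen_mul. apply subgroup_gpowz. apply gen_subgroup. apply gen_in. left; auto.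
  generalize (IH c). apply gen_incl. intros y Hy; right; auto.
Qed.

Lemma lin_add l c d : allc l -> length c = length l -> length d = length l ->
  lin (combine l c) ** lin (combine l d) = lin (combine l (vadd c d)).
Proof.
  revert c d; induction l as [|a l IH]; intros c d Hl Hc Hd; destruct c as [|k c]; destruct d as [|m d];
    simpl in *; try lia; gsimpl; auto.
  assert (Hl' : allc l) by (intros y Hy; apply Hl; simpl; auto).
  rewrite <- IH; try lia; auto. rewrite gpowz_add. gsimpl. f_equal.
  rewrite !gmulA. f_equal. apply lin_central. apply allc_combine; auto.
Qed.

Lemma lin_opp l c : allc l -> ginv (lin (combine l c)) = lin (combine l (map Z.opp c)).
Proof.
  revert c; induction l as [|a l IH]; intros c Hl; destruct c as [|k c]; simpl; gsimpl; auto.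
  assert (Hl' : allc l) by (intros y Hy; apply Hl; simpl; auto).
  rewrite <- IH, gpowz_opp; auto. apply central_inv. apply lin_central. apply allc_combine; auto.
Qed.

Lemma lin_zero l n : lin (combine l (repeat 0%Z n)) = 1.
Proof. revert n; induction l; destruct n; simpl; auto. rewrite IHl. gsimpl. auto. Qed.

Lemma unit_vec l y : In y l -> exists c, length c = length l /\ y = lin (combine l c).
Proof.
  induction l as [|a l IH]; intro Hin; [destruct Hin|]. destruct Hin as [<-|Hy].
  - exists (1%Z :: repeat 0%Z (length l)). split. simpl. rewrite repeat_length. auto.
    cbn [combine]. rewrite lin_cons, lin_zero, gpowz1. gsimpl. auto.
  - destruct (IH Hy) as [c [Hc E]]. exists (0%Z :: c). split. simpl. lia. cbn [combine]. rewrite lin_cons, <- E. simpl. gsimpl. auto.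
Qed.

Lemma gen_lin l x : allc l -> gen G (inL G l) x -> exists c, length c = length l /\ x = lin (combine l c).
Proof.
  intros Hl Hx. induction Hx as [y Hy| |y z _ [c [Hc ->]] _ [d [Hd ->]]|y _ [c [Hc ->]]].
  - apply unit_vec; auto.
  - exists (repeat 0%Z (length l)). rewrite repeat_length, lin_zero. auto.
  - exists (vadd c d). rewrite vadd_length, lin_add; auto; lia.
  - exists (map Z.opp c). rewrite length_map, lin_opp; auto.
Qed.

Definition indep l := forall c, length c = length l -> lin (combine l c) = 1 -> forall k, In k c -> k = 0%Z.

Lemma indep_unique l c d : allc l -> indep l -> length c = length l -> length d = length l ->
  lin (combine l c) = lin (combine l d) -> c = d.
Proof.
  intros Hl Hi Hc Hd E.
  assert (H0 : forall k, In k (vadd c (map Z.opp d)) -> k = 0%Z).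
  { apply Hi. rewrite vadd_length; rewrite ?length_map; lia.
    rewrite <- lin_add, <- lin_opp, E; auto; rewrite ?length_map; try lia. gsimpl. auto. }
  clear -Hc Hd H0. revert d Hc Hd H0. generalize (length l) as n. intro n. revert c.
  induction n; intros c d Hc Hd H0; destruct c as [|k c]; destruct d as [|m d]; simpl in *; try lia; auto.
  f_equal. assert (k + - m = 0)%Z by (apply H0; auto). lia.
  apply (IHn c d); try lia. intros; apply H0; auto.
Qed.

Definition nzq (q : G * Z) : bool := negb (Z.eqb (snd q) 0).

Lemma perm_filter p : Permutation p (filter nzq p ++ filter (fun q => negb (nzq q)) p).
Proof.
  induction p as [|q p IH]; simpl; auto.
  destruct (nzq q); simpl. constructor; auto.
  apply Permutation_cons_app. auto.
Qed.

Lemma lin_zeros p : (forall q, In q p -> snd q = 0%Z) -> lin p = 1.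
Proof.
  induction p as [|[a k] p IH]; intro H; simpl; auto.
  rewrite IH. replace k with 0%Z. simpl. gsimpl. auto. symmetry. apply (H (a, k)). simpl; auto.
  intros; apply H; simpl; auto.
Qed.

Fixpoint sumabs (p : list (G * Z)) : nat :=
  match p with [] => 0 | q :: p' => Z.abs_nat (snd q) + sumabs p' end.

Lemma sumabs_perm p q : Permutation p q -> sumabs p = sumabs q.
Proof. induction 1; simpl; lia. Qed.

Lemma gen_iff_perm l1 l2 : Permutation l1 l2 -> forall x, gen G (inL G l1) x <-> gen G (inL G l2) x.
Proof. intros H x. split; apply gen_perm; auto. symmetry; auto. Qed.

Section Reduce.
Variable S : gset G.
Hypothesis HS : subgroup G S.
Hypothesis TF : forall x k, S x -> k <> 0%Z -> gpowz x k = 1 -> x = 1.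

Lemma reduce n : forall p, (sumabs p <= n)%nat -> (forall q, In q p -> central (fst q) /\ S (fst q)) ->
  lin p = 1 -> (exists q, In q p /\ snd q <> 0%Z) ->
  exists l', (length l' < length p)%nat /\ (forall y, In y l' -> central y /\ S y) /\
    (forall x, gen G (inL G l') x <-> gen G (inL G (map fst p)) x).
Proof.
  induction n as [|n IH]; intros p Hn Hp Hlin [q0 [Hq0 Hq0nz]].
  - exfalso. assert (forall p, In q0 p -> snd q0 <> 0%Z -> sumabs p <> 0%nat).
    { clear. induction p as [|q p IH]; simpl; intros Hin Hnz; [destruct Hin|]. destruct Hin as [<-|H]; [lia|]. specialize (IH H Hnz). lia. }
    apply (H p); auto; lia.
  - set (qs := filter nzq p). set (zs := filter (fun q => negb (nzq q)) p).
    assert (Hperm : Permutation p (qs ++ zs)) by apply perm_filter.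
    assert (Hallc : allc (map fst p)) by (intros y Hy; apply in_map_iff in Hy; destruct Hy as [q [<- Hq]]; apply Hp; auto).
    assert (Hzs : lin zs = 1).
    { apply lin_zeros. intros q Hq. unfold zs in Hq. apply filter_In in Hq. destruct Hq as [_ Hq].
      unfold nzq in Hq. destruct (Z.eqb_spec (snd q) 0); simpl in *; auto; discriminate. }
    assert (Hqs : lin qs = 1).
    { transitivity (lin (qs ++ zs)). rewrite lin_app, Hzs. gsimpl. auto. rewrite <- (lin_perm p); auto. }
    assert (Hqsnz : forall q, In q qs -> snd q <> 0%Z).
    { intros q Hq. unfold qs in Hq. apply filter_In in Hq. destruct Hq as [_ Hq].
      unfold nzq in Hq. destruct (Z.eqb_spec (snd q) 0); simpl in *; auto; discriminate. }
    assert (Hin : forall q, In q qs \/ In q zs -> In q p).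
    { intros q [H|H]; unfold qs, zs in H; apply filter_In in H; tauto. }
    destruct qs as [|[a k] [|[b m] r]] eqn:Eqs.
    + exfalso. assert (In q0 (filter nzq p)). { apply filter_In. split; auto. unfold nzq. destruct (Z.eqb_spec (snd q0) 0); auto. }
      fold qs in H. rewrite Eqs in H. destruct H.
    +
      assert (Ha : a = 1).
      { apply (TF a k). apply (Hp (a, k)). apply Hin. left; simpl; auto.
        apply (Hqsnz (a, k)); simpl; auto. simpl in Hqs. gsimpl in Hqs. auto. }
      exists (map fst zs). split; [|split].
      * apply Permutation_length in Hperm. simpl in Hperm. rewrite length_map. lia.
      * intros y Hy. apply in_map_iff in Hy. destruct Hy as [q [<- Hq]]. apply Hp. apply Hin; auto.
      * intro x. rewrite (gen_iff_perm (map fst p) (map fst ((a, k) :: zs))) by (apply Permutation_map; auto).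
        simpl. split.
        -- apply gen_incl. intros y Hy; right; auto.
        -- apply gen_sub. intros y [<-|Hy]. subst a. apply gen_one. apply gen_in. auto.
    +
      assert (Hk : k <> 0%Z) by (apply (Hqsnz (a, k)); simpl; auto).
      assert (Hm : m <> 0%Z) by (apply (Hqsnz (b, m)); simpl; auto).
      assert (Hnorm : exists a k b m r', Permutation p ((a, k) :: (b, m) :: r') /\ k <> 0%Z /\ m <> 0%Z /\ (Z.abs m <= Z.abs k)%Z).
      { destruct (Z_le_gt_dec (Z.abs m) (Z.abs k)).
        - exists a, k, b, m, (r ++ zs). split; auto.
        - exists b, m, a, k, (r ++ zs). split; [|repeat split; auto; lia].
          rewrite Hperm. simpl. constructor. }
      clear Hqs Hqsnz Hin Hperm Hk Hm Eqs. clear a k b m r.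
      destruct Hnorm as [a [k [b [m [r [Hpr [Hk [Hm Hkm]]]]]]]].
      assert (Hpr' : forall q, In q ((a, k) :: (b, m) :: r) -> central (fst q) /\ S (fst q)).
      { intros q Hq. apply Hp. eapply Permutation_in. symmetry; eauto. auto. }
      assert (Ha := Hpr' (a, k) ltac:(simpl; auto)). assert (Hb := Hpr' (b, m) ltac:(simpl; auto)).
      simpl in Ha, Hb.
      set (s := if Bool.eqb (Z.ltb 0 k) (Z.ltb 0 m) then 1%Z else (-1)%Z).
      set (p'' := (a, (k - s * m)%Z) :: (b ** gpowz a s, m) :: r).
      assert (Hlin'' : lin p'' = 1).
      { rewrite <- Hlin, (lin_perm p _ Hpr Hallc). unfold p''.
        rewrite !lin_cons, gpowz_mul_comm by (apply central_commute; tauto). rewrite <- gpowz_mul.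
        assert (Hc : central (gpowz a (s * m))) by (apply central_gpowz; tauto).
        rewrite <- (Hc (gpowz b m)). gsimpl. rewrite gmulA, <- gpowz_add. f_equal. f_equal. lia. }
      assert (Hsum : (sumabs p'' < sumabs p)%nat).
      { rewrite (sumabs_perm _ _ Hpr). unfold p''. cbn [sumabs snd].
        unfold s. destruct (Z.ltb_spec 0 k), (Z.ltb_spec 0 m); cbn [Bool.eqb]; rewrite !Zabs2Nat.abs_nat_spec; lia. }
      destruct (IH p'') as [l' [Hl'1 [Hl'2 Hl'3]]].
      * lia.
      * unfold p''. intros q [<-|[<-|Hq]]; simpl.
        -- auto.
        -- split. apply central_mul; [tauto|]. apply central_gpowz; tauto.
           apply subgroup_mul; auto; [tauto|]. apply subgroup_gpowz; auto; tauto.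
        -- apply Hpr'; simpl; auto.
      * auto.
      * exists (b ** gpowz a s, m). split; simpl; auto.
      * exists l'. split; [|split]; auto.
        -- apply Permutation_length in Hpr. unfold p'' in Hl'1. simpl in *. lia.
        -- intro x. rewrite Hl'3. rewrite (gen_iff_perm (map fst p) (map fst ((a, k) :: (b, m) :: r))) by (apply Permutation_map; auto).
           unfold p''. simpl. split; apply gen_sub.
           ++ intros y [<-|[<-|Hy]].
              ** apply gen_in. left; auto.
              ** apply gen_mul. apply gen_in. right; left; auto. apply subgroup_gpowz. apply gen_subgroup. apply gen_in; left; auto.
              ** apply gen_in. right; right; auto.
           ++ intros y [<-|[<-|Hy]].
              ** apply gen_in. left; auto.
              ** assert (H1 : gen G (inL G (a :: b ** gpowz a s :: map fst r)) (b ** gpowz a s)) by (apply gen_in; right; left; auto).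
                 assert (H2 : gen G (inL G (a :: b ** gpowz a s :: map fst r)) (ginv (gpowz a s))).
                 { apply gen_inv. apply (subgroup_gpowz G (gen G (inL G (a :: b ** gpowz a s :: map fst r)))). apply gen_subgroup. apply gen_in; left; auto. }
                 pose proof (gen_mul _ _ _ _ H1 H2) as H3. gsimpl in H3. exact H3.
              ** apply gen_in. right; right; auto.
Qed.

Lemma basis_exists n : forall l, (length l <= n)%nat -> (forall y, In y l -> central y /\ S y) ->
  exists bs, (forall y, In y bs -> central y /\ S y) /\ (forall x, gen G (inL G bs) x <-> gen G (inL G l) x) /\ indep bs.
Proof.
  induction n as [|n IH]; intros l Hn Hl.
  - destruct l; simpl in Hn; try lia. exists []. split; [|split]. intros _ []. tauto.
    intros c Hc _ k Hk. destruct c; simpl in *; try lia; tauto.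
  - destruct (classic (indep l)) as [Hi|Hni].
    + exists l. split; [|split]; auto. tauto.
    + unfold indep in Hni.
      assert (exists c, length c = length l /\ lin (combine l c) = 1 /\ exists k, In k c /\ k <> 0%Z) as [c [Hc [Hlc [k [Hk Hk0]]]]].
      { apply NNPP. intro Hno. apply Hni. intros c Hc Hlc k Hk. apply NNPP. intro Hk0. apply Hno. exists c. eauto 6. }
      assert (Hmap : map fst (combine l c) = l) by (apply map_fst_combine; lia).
      destruct (reduce (sumabs (combine l c)) (combine l c)) as [l' [Hl'1 [Hl'2 Hl'3]]]; auto.
      * intros q Hq. destruct q as [y j]. simpl. apply in_combine_l in Hq. auto.
      * destruct (In_nth c k 0%Z Hk) as [i [Hi Ei]]. exists (nth i l (@gone G), k).
        split; auto. rewrite <- Ei. rewrite <- combine_nth by lia. apply nth_In. rewrite length_combine. lia.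
      * rewrite Hmap in Hl'3. rewrite length_combine in Hl'1.
        destruct (IH l') as [bs [Hb1 [Hb2 Hb3]]]; auto. lia.
        exists bs. split; [|split]; auto. intro x. rewrite Hb2. auto.
Qed.

End Reduce.

End Lin.

Fixpoint prodC (K : group) (w : nat) (f : nat -> K) : K :=
  match w with
  | 0 => gone
  | S w' => gmul (prodC K w' f) (commutator K (f (2 * w')) (f (2 * w' + 1)))
  end.

Definition Cw (K : group) (w : nat) (x : K) := exists f, x = prodC K w f.
Definition Dset (K : group) (w E : nat) (x : K) := Cw K w (gpow K x E).
Definition b2z (b : bool) : Z := if b then 1%Z else 0%Z.

Fixpoint blists (n : nat) : list (list bool) :=
  match n with
  | 0 => [[]]
  | S n => map (cons true) (blists n) ++ map (cons false) (blists n)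
  end.

Definition Phi_sem (K : group) (s w E : nat) : Prop :=
  exists z : list K, length z = s /\ (forall y, In y z -> central y) /\
    forall eps, In eps (blists s) -> existsb id eps = true -> forall y, central y ->
      ~ Dset K w E (gmul (gmul (lin K (combine z (map b2z eps))) y) y).

Lemma blists_In n l : In l (blists n) <-> length l = n.
Proof.
  revert l; induction n; intro l; simpl.
  - split. intros [<-|[]]; auto. destruct l; simpl; try discriminate; auto.
  - rewrite in_app_iff, !in_map_iff. split.
    + intros [[l' [<- H]]|[l' [<- H]]]; simpl; f_equal; apply IHn; auto.
    + destruct l as [|b l]; simpl; intro H; try discriminate. injection H; intro H'.
      destruct b; [left|right]; exists l; split; auto; apply IHn; auto.
Qed.

Lemma blists_NoDup n : NoDup (blists n).
Proof.
  induction n; simpl. constructor. intros []. constructor.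
  apply NoDup_app.
  - apply NoDup_map_inv with (f := @tl bool). rewrite map_map. simpl. rewrite map_id. auto.
  - apply NoDup_map_inv with (f := @tl bool). rewrite map_map. simpl. rewrite map_id. auto.
  - intros x H1 H2. apply in_map_iff in H1, H2. destruct H1 as [? [<- _]]. destruct H2 as [? [H _]]. discriminate.
Qed.

Lemma blists_length n : length (blists n) = 2 ^ n.
Proof. induction n; simpl; auto. rewrite length_app, !length_map. lia. Qed.

Section CwSec.
Variable K : group.
Local Notation "x ** y" := (@gmul K x y) (at level 40, left associativity).
Local Notation "1" := (@gone K).
Implicit Types (x y z a b : K).

Lemma prodC_S w f : prodC K (S w) f = prodC K w f ** commutator K (f (2 * w)) (f (2 * w + 1)).
Proof. reflexivity. Qed.

Lemma prodC_ext w f g : (forall i, i < 2 * w -> f i = g i) -> prodC K w f = prodC K w g.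
Proof.
  induction w; intro H. auto. rewrite !prodC_S. rewrite IHw by (intros; apply H; lia).
  rewrite (H (2 * w)), (H (2 * w + 1)) by lia. auto.
Qed.

Lemma Cw_zero : Cw K 0 1.
Proof. exists (fun _ => 1). auto. Qed.

Lemma Cw_comm a b : Cw K 1 (commutator K a b).
Proof. exists (fun i => if Nat.eqb i 0 then a else b). rewrite prodC_S. simpl. gsimpl. auto. Qed.

Lemma Cw_mul m n x y : Cw K m x -> Cw K n y -> Cw K (m + n) (x ** y).
Proof.
  revert y; induction n; intros y Hx [g ->].
  - simpl. gsimpl. rewrite Nat.add_0_r. auto.
  - rewrite prodC_S. destruct (IHn (prodC K n g) Hx (ex_intro _ g eq_refl)) as [h Eh].
    exists (fun i => if Nat.ltb i (2 * (m + n)) then h i else if Nat.eqb i (2 * (m + n)) then g (2 * n) else g (2 * n + 1)).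
    rewrite gmulA, Eh, (Nat.add_succ_r m n), prodC_S. f_equal.
    + apply prodC_ext. intros i Hi. replace (i <? 2 * (m + n)) with true by (symmetry; apply Nat.ltb_lt; lia). auto.
    + replace (2 * (m + n) <? 2 * (m + n)) with false by (symmetry; apply Nat.ltb_ge; lia).
      replace (2 * (m + n) =? 2 * (m + n)) with true by (symmetry; apply Nat.eqb_eq; lia).
      replace (2 * (m + n) + 1 <? 2 * (m + n)) with false by (symmetry; apply Nat.ltb_ge; lia).
      replace (2 * (m + n) + 1 =? 2 * (m + n)) with false by (symmetry; apply Nat.eqb_neq; lia). auto.
Qed.

Lemma Cw_inv w x : Cw K w x -> Cw K w (ginv x).
Proof.
  revert x; induction w; intros x [f ->].
  - exists f. simpl. apply ginv1.
  - rewrite prodC_S, ginvM. replace (S w) with (1 + w) by lia. apply Cw_mul.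
    replace (ginv (commutator K (f (2 * w)) (f (2 * w + 1)))) with (commutator K (f (2 * w + 1)) (f (2 * w))).
    apply Cw_comm. unfold commutator. gsimpl. auto.
    apply IHw. exists f; auto.
Qed.

Lemma Cw_ones n : Cw K n 1.
Proof.
  induction n. apply Cw_zero. replace (S n) with (n + 1) by lia.
  replace 1 with (1 ** commutator K 1 1) by (unfold commutator; gsimpl; auto). apply Cw_mul; auto. apply Cw_comm.
Qed.

Lemma Cw_mono w w' x : Cw K w x -> w <= w' -> Cw K w' x.
Proof. intros H Hw. replace w' with (w + (w' - w)) by lia. replace x with (x ** 1) by (gsimpl; auto). apply Cw_mul; auto. apply Cw_ones. Qed.

Lemma Cw_derived w x : Cw K w x -> derived K x.
Proof.
  intros [f ->]. induction w. apply gen_one. rewrite prodC_S. apply gen_mul; auto. apply gen_in.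
  exists (f (2 * w)), (f (2 * w + 1)). auto.
Qed.

Lemma derived_Cw x : derived K x -> exists w, Cw K w x.
Proof.
  intro H. induction H as [x [a [b [_ [_ ->]]]]| |x y _ [m Hm] _ [n Hn]|x _ [m Hm]].
  - exists 1%nat. apply Cw_comm.
  - exists 0. apply Cw_zero.
  - exists (m + n). apply Cw_mul; auto.
  - exists m. apply Cw_inv; auto.
Qed.

Lemma Cw_pow w n x : Cw K w x -> Cw K (w * n) (gpow K x n).
Proof.
  intro H. induction n; simpl. rewrite Nat.mul_0_r. apply Cw_zero.
  replace (w * S n) with (w * n + w) by lia. apply Cw_mul; auto.
Qed.

Lemma gpow_mul x m n : gpow K x (m * n) = gpow K (gpow K x m) n.
Proof. rewrite <- !gpowz_nat, Nat2Z.inj_mul, gpowz_mul, gpowz_nat. auto. Qed.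

Lemma gpow_mul_comm x y n : commute x y -> gpow K (x ** y) n = gpow K x n ** gpow K y n.
Proof. intro H. rewrite <- !gpowz_nat. apply gpowz_mul_comm; auto. Qed.

Lemma Dset_mul w w' E x y : commute x y -> Dset K w E x -> Dset K w' E y -> Dset K (w + w') E (x ** y).
Proof. unfold Dset. intros H H1 H2. rewrite gpow_mul_comm; auto. apply Cw_mul; auto. Qed.

Lemma Dset_pow w E m x : Dset K w E x -> Dset K (w * m) (E * m) x.
Proof. unfold Dset. intro H. rewrite gpow_mul. apply Cw_pow; auto. Qed.

Lemma Dset_mono w w' E x : Dset K w E x -> w <= w' -> Dset K w' E x.
Proof. unfold Dset. apply Cw_mono. Qed.

Lemma Dset_isol w E x : 1 <= E -> Dset K w E x -> isolator K (derived K) x.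
Proof. intros HE H. exists E. split; auto. eapply Cw_derived; eauto. Qed.

Lemma Dset_one w E : Dset K w E 1.
Proof. unfold Dset. replace (gpow K 1 E) with 1. apply Cw_ones. rewrite <- gpowz_nat, gpowz_one. auto. Qed.

End CwSec.

Lemma vadd_nil_l d : vadd [] d = []. Proof. reflexivity. Qed.

Fixpoint bop (f : bool -> bool -> bool) (l1 l2 : list bool) : list bool :=
  match l1, l2 with
  | x :: l1', y :: l2' => f x y :: bop f l1' l2'
  | _, _ => []
  end.

Lemma bop_length f l1 l2 : length l1 = length l2 -> length (bop f l1 l2) = length l1.
Proof. revert l2; induction l1; destruct l2; simpl; intros; try lia. rewrite IHl1; lia. Qed.

Lemma b2z_split l1 l2 : length l1 = length l2 ->
  vadd (map b2z l1) (map b2z l2) = vadd (map b2z (bop xorb l1 l2)) (vadd (map b2z (bop andb l1 l2)) (map b2z (bop andb l1 l2))).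
Proof.
  revert l2; induction l1 as [|x l1 IH]; destruct l2 as [|y l2]; simpl; intros; try lia; auto.
  f_equal. destruct x, y; reflexivity. apply IH. lia.
Qed.

Lemma bxor_nonzero l1 l2 : length l1 = length l2 -> l1 <> l2 -> existsb id (bop xorb l1 l2) = true.
Proof.
  revert l2; induction l1 as [|x l1 IH]; destruct l2 as [|y l2]; simpl; intros Hl Hne; try lia.
  - congruence.
  - destruct x, y; simpl; auto; apply IH; try lia; congruence.
Qed.

Lemma even_split (c1 c2 : list Z) : length c1 = length c2 -> map Z.odd c1 = map Z.odd c2 ->
  vadd c1 c2 = vadd (map (fun t => t / 2)%Z (vadd c1 c2)) (map (fun t => t / 2)%Z (vadd c1 c2)).
Proof.
  revert c2; induction c1 as [|k1 c1 IH]; destruct c2 as [|k2 c2]; simpl; intros Hl Ho; try lia; auto.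
  injection Ho; intros Ho2 Ho1. f_equal.
  - pose proof (Z.div_mod (k1 + k2) 2). pose proof (Zmod_odd (k1 + k2)). rewrite Z.odd_add, Ho1 in H0.
    destruct (Z.odd k2); simpl in H0; lia.
  - apply IH; auto.
Qed.

Lemma NoDup_map_inj {A B : Type} (f : A -> B) l : NoDup l -> (forall x y, In x l -> In y l -> f x = f y -> x = y) -> NoDup (map f l).
Proof.
  induction 1 as [|x l Hx Hl IH]; intro Hinj; simpl; constructor.
  - intro Hin. apply in_map_iff in Hin. destruct Hin as [y [Ey Hy]].
    assert (y = x) by (apply Hinj; simpl; auto). subst. auto.
  - apply IH. intros; apply Hinj; simpl; auto.
Qed.

Lemma zero_b2z (eps : list bool) (c : list Z) : length eps = length c ->
  (forall k, In k (vadd (map b2z eps) (vadd c c)) -> k = 0%Z) -> existsb id eps = false.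
Proof.
  revert c; induction eps as [|x eps IH]; destruct c as [|k c]; cbn [length vadd map existsb]; intros Hl H; try lia; auto.
  assert (E : (b2z x + (k + k) = 0)%Z) by (apply H; left; auto).
  destruct x; unfold b2z in E; [lia|]. cbn [id orb]. apply (IH c). lia. intros; apply H; right; auto.
Qed.

Section Nice.
Variable K : group.
Local Notation "x ** y" := (@gmul K x y) (at level 40, left associativity).
Local Notation "1" := (@gone K).
Implicit Types (x y z a b u : K).
Variable K0 : gset K.
Hypothesis Hfg : fin_gen K.
Hypothesis Hnil : nilpotent K.
Hypothesis Hadd : addition K K0.

Local Notation Is := (isolator K (derived K)).
Local Notation II := (Iset K).

Lemma K0_sub : subgroup K K0. Proof. destruct Hadd as [H _]. exact H. Qed.
Lemma K0_central x : K0 x -> central x. Proof. intro H. destruct Hadd as [_ [H1 _]]. exact (H1 x H). Qed.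
Lemma K0_I x : K0 x -> II x -> x = 1. Proof. destruct Hadd as [_ [_ [H1 _]]]. apply H1. Qed.
Lemma center_decomp z : central z -> exists a u, K0 a /\ II u /\ z = a ** u.
Proof. intro H. destruct Hadd as [_ [_ [_ H1]]]. apply H1. exact H. Qed.
Lemma II_central x : II x -> central x. Proof. intros [_ H]. exact H. Qed.

Lemma der_sub : subgroup K (derived K). Proof. apply gen_subgroup. Qed.

Lemma gpow_one n : gpow K 1 n = 1.
Proof. rewrite <- gpowz_nat. apply gpowz_one. Qed.
Lemma gpow_inv x n : gpow K (ginv x) n = ginv (gpow K x n).
Proof. rewrite <- !gpowz_nat. apply gpowz_inv. Qed.

Lemma Is_one : Is 1.
Proof. exists 1%nat. split; auto. rewrite gpow_one. apply gen_one. Qed.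
Lemma Is_inv x : Is x -> Is (ginv x).
Proof. intros [k [Hk H]]. exists k. split; auto. rewrite gpow_inv. apply gen_inv; auto. Qed.
Lemma Is_mulc x y : commute x y -> Is x -> Is y -> Is (x ** y).
Proof.
  intros Hx [k [Hk H1]] [l [Hl H2]]. exists (k * l). split. lia.
  rewrite gpow_mul_comm by (apply Hx). rewrite gpow_mul, (Nat.mul_comm k l), gpow_mul.
  apply gen_mul; apply subgroup_gpow; auto using der_sub.
Qed.
Lemma Is_cancel p q : central q -> Is q -> Is (p ** q) -> Is p.
Proof.
  intros Hq Iq Ipq. replace p with ((p ** q) ** ginv q) by (gsimpl; auto).
  apply Is_mulc. apply commute_sym. apply central_inv; auto. auto. apply Is_inv; auto.
Qed.

Lemma II_sub : subgroup K II.
Proof.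
  split; [|split].
  - split. apply Is_one. apply central_one.
  - intros x y [Ix Cx] [Iy Cy]. split. apply Is_mulc; auto. apply Cx. apply central_mul; auto.
  - intros x [Ix Cx]. split. apply Is_inv; auto. apply central_inv; auto.
Qed.

Lemma K0_tf x k : K0 x -> k <> 0%Z -> gpowz x k = 1 -> x = 1.
Proof.
  intros Hx Hk E. apply K0_I; auto. split; [|apply K0_central; auto].
  exists (Z.to_nat (Z.abs k)). split. lia.
  rewrite <- gpowz_nat. replace (Z.of_nat (Z.to_nat (Z.abs k))) with (Z.abs k) by lia.
  destruct (Z_le_gt_dec 0 k).
  - rewrite Z.abs_eq by lia. rewrite E. apply gen_one.
  - rewrite Z.abs_neq by lia. rewrite gpowz_opp, E, ginv1. apply gen_one.
Qed.

Lemma subgroup_lin (S : gset K) l c : subgroup K S -> (forall y, In y l -> S y) -> S (lin K (combine l c)).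
Proof. intros HS Hl. apply (gen_min K (inL K l) S HS Hl). apply lin_gen. Qed.

Definition is_basis (e : list K) :=
  (forall y, In y e -> central y /\ K0 y) /\ indep K e /\
  (forall x, K0 x -> exists c, length c = length e /\ x = lin K (combine e c)).

Lemma basis_K0 : exists e, is_basis e.
Proof.
  destruct (fg_nilp_noeth K Hfg Hnil K0 K0_sub) as [L [HL1 HL2]].
  destruct (basis_exists K K0 K0_sub K0_tf (length L) L (le_n _)) as [bs [Hb1 [Hb2 Hb3]]].
  { intros y Hy. split; auto. apply K0_central; auto. }
  exists bs. split; [|split]; auto.
  intros x Hx. apply gen_lin. intros y Hy; apply Hb1; auto. apply Hb2. auto.
Qed.

Lemma I_gens : exists U, (forall u, In u U -> II u) /\
  forall x, II x -> exists c, length c = length U /\ x = lin K (combine U c).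
Proof.
  destruct (fg_nilp_noeth K Hfg Hnil II II_sub) as [L [HL1 HL2]].
  exists L. split; auto. intros x Hx. apply gen_lin; auto. intros y Hy. apply II_central; auto.
Qed.

Lemma bounds_list U : (forall u, In u U -> Is u) -> exists w E, (1 <= E)%nat /\ forall u, In u U -> Dset K w E u.
Proof.
  induction U as [|u U IH]; intro HU.
  - exists 0%nat, 1%nat. split; auto. intros u [].
  - destruct IH as [w1 [E1 [HE1 H1]]]. intros; apply HU; simpl; auto.
    destruct (HU u (or_introl eq_refl)) as [k [Hk Hder]].
    destruct (derived_Cw K _ Hder) as [w2 Hw2].
    exists (w1 * k + w2 * E1)%nat, (E1 * k)%nat. split. nia.
    intros u' [<-|Hu'].
    + apply Dset_mono with (w2 * E1)%nat; [|lia]. rewrite (Nat.mul_comm E1 k). apply Dset_pow. exact Hw2.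
    + apply Dset_mono with (w1 * k)%nat; [|lia]. apply Dset_pow. auto.
Qed.

Lemma Dset_lin01 w E U eps : (forall u, In u U -> central u) -> (forall u, In u U -> Dset K w E u) ->
  (forall k, In k eps -> k = 0%Z \/ k = 1%Z) -> Dset K (w * length U) E (lin K (combine U eps)).
Proof.
  revert eps; induction U as [|u U IH]; intros eps HC HD He; destruct eps as [|k eps]; simpl.
  - apply Dset_one.
  - apply Dset_one.
  - apply Dset_mono with 0%nat; [apply Dset_one|lia].
  - replace (w * S (length U))%nat with (w + w * length U)%nat by lia.
    apply Dset_mul.
    + apply central_commute. apply central_gpowz. apply HC; simpl; auto.
    + destruct (He k (or_introl eq_refl)) as [->| ->].
      * apply Dset_mono with 0%nat; [apply Dset_one|lia].
      * rewrite gpowz1. apply HD; simpl; auto.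
    + apply IH; intros; try apply HC; try apply HD; try apply He; simpl; auto.
Qed.

Lemma vadd_split (c : list Z) : c = vadd (map (fun t : Z => t mod 2)%Z c) (vadd (map (fun t : Z => t / 2)%Z c) (map (fun t : Z => t / 2)%Z c)).
Proof.
  induction c as [|k c IH]; simpl; auto. f_equal; auto.
  pose proof (Z.div_mod k 2). lia.
Qed.

Lemma good_bounds : exists w E, (1 <= E)%nat /\ forall u, II u -> exists y, central y /\ Dset K w E (u ** y ** y).
Proof.
  destruct I_gens as [U [HU1 HU2]].
  destruct (bounds_list U) as [w [E [HE HD]]]. intros; apply HU1; auto.
  assert (HC : allc K U) by (intros y Hy; apply II_central; auto).
  exists (w * length U)%nat, E. split; auto.
  intros u Hu. destruct (HU2 u Hu) as [c [Hc ->]].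
  set (e := map (fun t : Z => t mod 2)%Z c). set (h := map (fun t : Z => t / 2)%Z c).
  assert (Ec : c = vadd e (vadd h h)) by apply vadd_split.
  exists (ginv (lin K (combine U h))). split.
  - apply central_inv. apply lin_central. apply allc_combine; auto.
  - assert (He : length e = length U) by (unfold e; rewrite length_map; auto).
    assert (Hh : length h = length U) by (unfold h; rewrite length_map; auto).
    rewrite Ec, <- lin_add, <- lin_add; auto; try (rewrite vadd_length; lia).
    gsimpl. apply Dset_lin01; auto.
    intros k Hk. unfold e in Hk. apply in_map_iff in Hk. destruct Hk as [z [<- _]].
    pose proof (Z.mod_pos_bound z 2). lia.
Qed.

Lemma swapc a x v : central a -> x ** (a ** v) = a ** (x ** v).
Proof. intro Ha. rewrite gmulA, <- (Ha x), gmulA'. auto. Qed.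

Lemma lower e : is_basis e -> forall w E, (1 <= E)%nat -> Phi_sem K (length e) w E.
Proof.
  intros [He1 [He2 He3]] w E HE. exists e. split; auto. split. intros y Hy; apply He1; auto.
  intros eps Heps Hex y Hy HD.
  apply blists_In in Heps.
  set (L := lin K (combine e (map b2z eps))) in *.
  assert (HL : K0 L) by (apply subgroup_lin; [apply K0_sub| intros; apply He1; auto]).
  assert (HLc : central L) by (apply K0_central; auto).
  apply Dset_isol in HD; auto.
  destruct (center_decomp y Hy) as [a [u [Ha [Hu ->]]]].
  assert (Hac : central a) by (apply K0_central; auto).
  assert (Huc : central u) by (apply II_central; auto).
  assert (E1 : L ** (a ** u) ** (a ** u) = (L ** a ** a) ** (u ** u)).
  { gsimpl. f_equal. f_equal. apply swapc; auto. }
  rewrite E1 in HD.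
  apply Is_cancel in HD; [| apply central_mul; auto | apply Is_mulc; [apply commute_refl|apply Hu|apply Hu]].
  assert (Hp : L ** a ** a = 1).
  { apply K0_I. apply subgroup_mul. apply K0_sub. apply subgroup_mul; auto. apply K0_sub. auto.
    split; auto. apply central_mul; auto. apply central_mul; auto. }
  destruct (He3 a Ha) as [c [Hc ->]].
  assert (Hl : forall k, In k (vadd (map b2z eps) (vadd c c)) -> k = 0%Z).
  { assert (Hlen1 : length (map b2z eps) = length e) by (rewrite length_map; lia).
    assert (Hlen2 : length (vadd c c) = length e) by (rewrite vadd_length; lia).
    assert (HeC : allc K e) by (intros yy Hyy; apply He1; auto).
    apply He2. rewrite vadd_length; lia.
    rewrite <- (lin_add K e (map b2z eps) (vadd c c)), <- (lin_add K e c c) by auto.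
    rewrite <- Hp. unfold L. gsimpl. auto. }
  apply zero_b2z in Hl. congruence. lia.
Qed.

Lemma decomp_list zl : (forall y, In y zl -> central y) -> exists al ul, length al = length zl /\ length ul = length zl /\
  (forall x, In x al -> K0 x) /\ (forall x, In x ul -> II x) /\
  forall c, lin K (combine zl c) = lin K (combine al c) ** lin K (combine ul c).
Proof.
  induction zl as [|z0 zl IH]; intro Hz.
  - exists [], []. split; auto. split; auto. split; [intros _ []|]. split; [intros _ []|].
    intros c. destruct c; simpl; gsimpl; auto.
  - destruct IH as [al [ul [H1 [H2 [H3 [H4 H5]]]]]]. intros; apply Hz; simpl; auto.
    destruct (center_decomp z0 (Hz z0 (or_introl eq_refl))) as [a0 [u0 [Ha0 [Hu0 E0]]]].
    exists (a0 :: al), (u0 :: ul). split; [simpl; lia|]. split; [simpl; lia|]. split; [|split].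
    + intros x [<-|Hx]; auto.
    + intros x [<-|Hx]; auto.
    + intros [|k c]; simpl. gsimpl; auto.
      rewrite H5, E0, gpowz_mul_comm. gsimpl. f_equal. symmetry. apply swapc.
      apply central_gpowz. apply II_central; auto.
      apply central_commute. apply K0_central; auto.
Qed.

Definition coord (e : list K) (x : K) : list Z :=
  epsilon (inhabits []) (fun c => length c = length e /\ x = lin K (combine e c)).

Lemma coord_spec e x : is_basis e -> K0 x -> length (coord e x) = length e /\ x = lin K (combine e (coord e x)).
Proof.
  intros [_ [_ He]] Hx. unfold coord. apply (epsilon_spec (inhabits []) (fun c => length c = length e /\ x = lin K (combine e c))).
  apply He; auto.
Qed.

Lemma pigeon e al : is_basis e -> (forall x, In x al -> K0 x) -> (length e < length al)%nat ->
  exists eps, In eps (blists (length al)) /\ existsb id eps = true /\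
    exists b, K0 b /\ lin K (combine al (map b2z eps)) = b ** b.
Proof.
  intros Hb Hal Hlt. pose proof Hb as [He1 [He2 He3]].
  assert (HeC : allc K e) by (intros y Hy; apply He1; auto).
  assert (HaC : allc K al) by (intros y Hy; apply K0_central; auto).
  set (f := fun eps => map Z.odd (coord e (lin K (combine al (map b2z eps))))).
  assert (HK0 : forall eps, K0 (lin K (combine al (map b2z eps)))) by (intros; apply subgroup_lin; auto; apply K0_sub).
  destruct (classic (exists e1 e2, In e1 (blists (length al)) /\ In e2 (blists (length al)) /\ e1 <> e2 /\ f e1 = f e2))
    as [[e1 [e2 [H1 [H2 [Hne Hf]]]]]|Hno].
  - apply blists_In in H1. apply blists_In in H2.
    exists (bop xorb e1 e2). split. apply blists_In. rewrite bop_length; lia. split. apply bxor_nonzero; auto. lia.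
    set (x1 := lin K (combine al (map b2z e1))). set (x2 := lin K (combine al (map b2z e2))).
    destruct (coord_spec e x1 Hb (HK0 e1)) as [Hc1 Ex1].
    destruct (coord_spec e x2 Hb (HK0 e2)) as [Hc2 Ex2].
    set (c1 := coord e x1) in *. set (c2 := coord e x2) in *.
    set (h := map (fun t => t / 2)%Z (vadd c1 c2)).
    set (g := lin K (combine e h)).
    set (m := lin K (combine al (map b2z (bop andb e1 e2)))).
    assert (Hg : x1 ** x2 = g ** g).
    { rewrite Ex1, Ex2 at 1. rewrite lin_add; auto. unfold g, h. rewrite lin_add; auto.
      f_equal. f_equal. apply even_split. lia. apply Hf.
      unfold h; rewrite length_map, vadd_length; lia. unfold h; rewrite length_map, vadd_length; lia. }
    assert (Hm : x1 ** x2 = lin K (combine al (map b2z (bop xorb e1 e2))) ** (m ** m)).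
    { unfold x1, x2, m. rewrite !lin_add; rewrite ?vadd_length, ?length_map, ?bop_length; try lia; auto.
      f_equal. f_equal. apply b2z_split. lia. }
    exists (g ** ginv m). split.
    + apply subgroup_mul. apply K0_sub. apply subgroup_lin. apply K0_sub. intros; apply He1; auto.
      apply subgroup_inv. apply K0_sub. apply HK0.
    + assert (Hmc : central m) by (apply K0_central; apply HK0).
      apply (gmul_cancel_r _ (m ** m)). rewrite <- Hm, Hg. gsimpl. f_equal.
      rewrite <- (Hmc g). gsimpl. auto.
  - exfalso.
    assert (HND : NoDup (map f (blists (length al)))).
    { apply NoDup_map_inj. apply blists_NoDup. intros x y Hx Hy Exy. apply NNPP. intro Hne. apply Hno. exists x, y. auto. }
    assert (Hinc : incl (map f (blists (length al))) (blists (length e))).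
    { intros l Hl. apply in_map_iff in Hl. destruct Hl as [eps [<- _]]. apply blists_In.
      unfold f. rewrite length_map. apply coord_spec; auto. }
    pose proof (NoDup_incl_length HND Hinc) as Hlen. rewrite length_map, !blists_length in Hlen.
    pose proof (Nat.pow_lt_mono_r 2 (length e) (length al) ltac:(lia) Hlt). lia.
Qed.

Lemma upper e s w E : is_basis e -> (forall u, II u -> exists y, central y /\ Dset K w E (u ** y ** y)) ->
  Phi_sem K s w E -> (s <= length e)%nat.
Proof.
  intros Hb Hbd [zl [Hzl [Hzc HPhi]]]. apply NNPP. intro Hlt.
  destruct (decomp_list zl Hzc) as [al [ul [Ha1 [Hu1 [Ha2 [Hu2 Hlin]]]]]].
  destruct (pigeon e al Hb Ha2) as [eps [Heps [Hex [b [Hb0 Eb]]]]]. lia.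
  rewrite Ha1, Hzl in Heps.
  set (U := lin K (combine ul (map b2z eps))).
  assert (HU : II U) by (apply subgroup_lin; auto; apply II_sub).
  destruct (Hbd U HU) as [y' [Hy' HD]].
  assert (Hbc : central b) by (apply K0_central; auto).
  assert (Hbi : central (ginv b)) by (apply central_inv; auto).
  assert (HUc : central U) by (apply II_central; auto).
  apply (HPhi eps Heps Hex (ginv b ** y')). apply central_mul; auto.
  replace (lin K (combine zl (map b2z eps)) ** (ginv b ** y') ** (ginv b ** y')) with (U ** y' ** y'); auto.
  rewrite Hlin, Eb. fold U. gsimpl.
  rewrite (swapc (ginv b) U) by auto. gsimpl.
  rewrite (swapc (ginv b) y') by auto. rewrite (swapc (ginv b) U) by auto. gsimpl. auto.
Qed.

End Nice.

Definition override (K : group) (v : nat -> K) (k m : nat) (f : nat -> K) : nat -> K :=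
  fun i => if andb (Nat.leb k i) (Nat.ltb i (k + m)) then f i else v i.

Definition Exs (l : list nat) (p : formula) : formula := fold_right FEx p l.

Lemma sat_Exs K v k m p : sat K v (Exs (seq k m) p) <-> exists f, sat K (override K v k m f) p.
Proof.
  revert k v; induction m; intros k v; simpl.
  - split. intro H. exists v. replace (override K v k 0 v) with v; auto.
    apply functional_extensionality; intro i. unfold override. destruct (andb _ _); auto.
    intros [f H]. replace v with (override K v k 0 f); auto.
    apply functional_extensionality; intro i. unfold override. 
    destruct (Nat.leb_spec k i), (Nat.ltb_spec i (k + 0)); simpl; auto; lia.
  - split.
    + intros [a H]. apply IHm in H. destruct H as [f H].
      exists (fun i => if Nat.eqb i k then a else f i).
      replace (override K v k (S m) (fun i => if Nat.eqb i k then a else f i)) with (override K (upd K v k a) (S k) m f); auto.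
      apply functional_extensionality; intro i. unfold override, upd.
      destruct (Nat.eqb_spec i k), (Nat.leb_spec (S k) i), (Nat.ltb_spec i (S k + m)), (Nat.leb_spec k i), (Nat.ltb_spec i (k + S m)); simpl; auto; lia.
    + intros [f H]. exists (f k). apply IHm. exists f.
      replace (override K (upd K v k (f k)) (S k) m f) with (override K v k (S m) f); auto.
      apply functional_extensionality; intro i. unfold override, upd.
      destruct (Nat.eqb_spec i k), (Nat.leb_spec (S k) i), (Nat.ltb_spec i (S k + m)), (Nat.leb_spec k i), (Nat.ltb_spec i (k + S m)); simpl; subst; auto; lia.
Qed.

Lemma free_Exs x l p : free_in x (Exs l p) -> free_in x p /\ ~ In x l.
Proof.
  induction l; simpl; intro H. split; auto.
  destruct H as [Hne H]. apply IHl in H. destruct H. split; auto. intros [<-|Hin]; auto.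
Qed.

Fixpoint BigAnd (l : list formula) : formula :=
  match l with [] => FNot FFalse | p :: l' => FAnd p (BigAnd l') end.

Lemma sat_BigAnd K v l : sat K v (BigAnd l) <-> forall p, In p l -> sat K v p.
Proof.
  induction l as [|q l IH]; simpl.
  - split. intros _ p []. intros _ H; exact H.
  - rewrite IH. split. intros [H1 H2] p [<-|Hp]; auto. intro H; split; auto.
Qed.

Lemma free_BigAnd x l : free_in x (BigAnd l) -> exists p, In p l /\ free_in x p.
Proof. induction l as [|q l IH]; simpl. tauto. intros [H|H]; eauto. destruct (IH H) as [p [? ?]]; eauto. Qed.

Lemma teval_ext K v v' t : (forall x, tvar_in x t -> v x = v' x) -> teval K v t = teval K v' t.
Proof. induction t; simpl; intros; auto; f_equal; auto. Qed.

Definition Cent (t i : nat) : formula := FAll t (FEq (TMul (TVar i) (TVar t)) (TMul (TVar t) (TVar i))).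

Lemma sat_Cent K v t i : i <> t -> (sat K v (Cent t i) <-> central (v i)).
Proof.
  intro H. unfold Cent. simpl. unfold upd. rewrite (proj2 (Nat.eqb_neq i t) H), Nat.eqb_refl.
  split; intros H1 a; apply H1.
Qed.

Lemma free_Cent x t i : free_in x (Cent t i) -> x = i.
Proof. simpl. intros [Hne [[H|H]|[H|H]]]; congruence. Qed.

Definition commTerm (a b : term) : term := TMul (TMul (TInv a) (TInv b)) (TMul a b).

Fixpoint commT (w k : nat) : term :=
  match w with
  | 0 => TOne
  | S w' => TMul (commT w' k) (commTerm (TVar (k + 2 * w')) (TVar (k + 2 * w' + 1)))
  end.

Lemma teval_commT K v w k : teval K v (commT w k) = prodC K w (fun i => v (k + i)).
Proof.
  induction w. reflexivity. rewrite prodC_S. cbn [commT teval]. rewrite IHw. f_equal.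
  unfold commTerm, commutator. cbn [teval]. rewrite (Nat.add_assoc k (2 * w) 1). reflexivity.
Qed.

Lemma tvar_commT x w k : tvar_in x (commT w k) -> k <= x < k + 2 * w.
Proof. induction w; simpl. tauto. intros [H|[[H|H]|[H|H]]]; try (apply IHw in H); lia. Qed.

Fixpoint powT (t : term) (n : nat) : term :=
  match n with 0 => TOne | S n' => TMul (powT t n') t end.

Lemma teval_powT K v t n : teval K v (powT t n) = gpow K (teval K v t) n.
Proof. induction n; simpl; auto. rewrite IHn. auto. Qed.

Lemma tvar_powT x t n : tvar_in x (powT t n) -> tvar_in x t.
Proof. induction n; simpl; tauto. Qed.

Definition Dform (s w E : nat) (t : term) : formula :=
  Exs (seq (s + 2) (2 * w)) (FEq (powT t E) (commT w (s + 2))).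

Lemma sat_Dform K v s w E t : (forall x, tvar_in x t -> x < s + 2) ->
  (sat K v (Dform s w E t) <-> Dset K w E (teval K v t)).
Proof.
  intro Ht. unfold Dform. rewrite sat_Exs. cbn [sat]. unfold Dset, Cw.
  assert (Hev : forall f, teval K (override K v (s + 2) (2 * w) f) t = teval K v t).
  { intro f. apply teval_ext. intros x Hx. specialize (Ht x Hx). unfold override.
    destruct (Nat.leb_spec (s + 2) x); simpl; auto; lia. }
  split.
  - intros [f H]. rewrite teval_powT, teval_commT, Hev in H. exists (fun i => f (s + 2 + i)).
    rewrite H. apply prodC_ext. intros i Hi. unfold override.
    replace (Nat.leb (s + 2) (s + 2 + i)) with true by (symmetry; apply Nat.leb_le; lia).
    replace (Nat.ltb (s + 2 + i) (s + 2 + 2 * w)) with true by (symmetry; apply Nat.ltb_lt; lia). reflexivity.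
  - intros [g H]. exists (fun i => g (i - (s + 2))). rewrite teval_powT, teval_commT, Hev, H.
    apply prodC_ext. intros i Hi. unfold override.
    replace (Nat.leb (s + 2) (s + 2 + i)) with true by (symmetry; apply Nat.leb_le; lia).
    replace (Nat.ltb (s + 2 + i) (s + 2 + 2 * w)) with true by (symmetry; apply Nat.ltb_lt; lia).
    simpl. f_equal. lia.
Qed.

Lemma free_Dform x s w E t : free_in x (Dform s w E t) -> tvar_in x t.
Proof.
  unfold Dform. intro H. apply free_Exs in H. destruct H as [[H|H] Hn]; simpl in H.
  - apply tvar_powT in H. auto.
  - apply tvar_commT in H. exfalso. apply Hn. apply in_seq. lia.
Qed.

Fixpoint prodT (eps : list bool) (k : nat) : term :=
  match eps with
  | [] => TOne
  | b :: e => TMul (if b then TVar k else TOne) (prodT e (S k))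
  end.

Lemma teval_prodT K v eps k : teval K v (prodT eps k) = lin K (combine (map v (seq k (length eps))) (map b2z eps)).
Proof.
  revert k; induction eps as [|b eps IH]; intro k; simpl; auto.
  rewrite IH. f_equal. destruct b; simpl; gsimpl; auto.
Qed.

Lemma tvar_prodT x eps k : tvar_in x (prodT eps k) -> k <= x < k + length eps.
Proof.
  revert k; induction eps as [|b eps IH]; intro k; simpl. tauto.
  intros [H|H]. destruct b; simpl in H; [lia|tauto]. apply IH in H. lia.
Qed.

Definition bodyF (s w E : nat) (eps : list bool) : formula :=
  FAll s (FImp (Cent (s + 1) s) (FNot (Dform s w E (TMul (TMul (prodT eps 0) (TVar s)) (TVar s))))).

Definition Phi (s w E : nat) : formula :=
  Exs (seq 0 s) (FAnd (BigAnd (map (Cent (s + 1)) (seq 0 s)))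
                      (BigAnd (map (bodyF s w E) (filter (existsb id) (blists s))))).

Lemma Phi_sentence s w E : sentence (Phi s w E).
Proof.
  intros x H. unfold Phi in H. apply free_Exs in H. destruct H as [H Hx].
  assert (Hs : s <= x) by (destruct (le_lt_dec s x); auto; exfalso; apply Hx; apply in_seq; lia).
  simpl in H. destruct H as [H|H]; apply free_BigAnd in H; destruct H as [p [Hp Hf]]; apply in_map_iff in Hp.
  - destruct Hp as [i [<- Hi]]. apply free_Cent in Hf. apply in_seq in Hi. lia.
  - destruct Hp as [eps [<- Heps]]. apply filter_In in Heps. destruct Heps as [Heps _]. apply blists_In in Heps.
    unfold bodyF in Hf. simpl in Hf. destruct Hf as [Hne [Hf|Hf]].
    + apply free_Cent in Hf. lia.
    + apply free_Dform in Hf. simpl in Hf. destruct Hf as [[Hf|Hf]|Hf].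
      * apply tvar_prodT in Hf. lia.
      * lia.
      * lia.
Qed.

Lemma map_nth_seq {A : Type} (z : list A) d : map (fun i => nth i z d) (seq 0 (length z)) = z.
Proof.
  induction z as [|a z IH]; simpl; auto. f_equal. rewrite <- seq_shift, map_map. simpl. auto.
Qed.

Lemma sat_Phi K v s w E : sat K v (Phi s w E) <-> Phi_sem K s w E.
Proof.
  unfold Phi. rewrite sat_Exs. simpl.
  split.
  - intros [f [H1 H2]]. set (rho := override K v 0 s f) in *.
    rewrite sat_BigAnd in H1, H2.
    assert (Hrho : forall i, i < s -> rho i = f i).
    { intros i Hi. unfold rho, override. destruct (Nat.leb_spec 0 i), (Nat.ltb_spec i (0 + s)); simpl; auto; lia. }
    exists (map rho (seq 0 s)). split. rewrite length_map, length_seq; auto. split.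
    + intros y Hy. apply in_map_iff in Hy. destruct Hy as [i [<- Hi]].
      apply (sat_Cent K rho (s + 1) i). apply in_seq in Hi. lia. apply H1. apply in_map. auto.
    + intros eps Heps Hex y Hy HD.
      assert (Hb := H2 (bodyF s w E eps) ltac:(apply in_map; apply filter_In; auto)).
      unfold bodyF in Hb. simpl in Hb. apply (Hb y).
      * apply sat_Cent. lia. unfold upd. rewrite Nat.eqb_refl. auto.
      * apply blists_In in Heps. rewrite sat_Dform.
        -- simpl. rewrite teval_prodT. unfold upd at 2 3. rewrite Nat.eqb_refl.
           replace (map (upd K rho s y) (seq 0 (length eps))) with (map rho (seq 0 s)); auto.
           rewrite Heps. apply map_ext_in. intros i Hi. apply in_seq in Hi. unfold upd.
           destruct (Nat.eqb_spec i s); auto; lia.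
        -- intros x Hx. simpl in Hx. destruct Hx as [[Hx|Hx]|Hx]; try lia. apply tvar_prodT in Hx. lia.
  - intros [z [Hz [Hzc HPhi]]]. exists (fun i => nth i z (@gone K)).
    set (rho := override K v 0 s (fun i => nth i z (@gone K))).
    assert (Hrho : forall i, i < s -> rho i = nth i z (@gone K)).
    { intros i Hi. unfold rho, override. destruct (Nat.leb_spec 0 i), (Nat.ltb_spec i (0 + s)); simpl; auto; lia. }
    assert (Hmap : map rho (seq 0 s) = z).
    { transitivity (map (fun i => nth i z (@gone K)) (seq 0 (length z))); [|apply map_nth_seq].
      rewrite Hz. apply map_ext_in. intros i Hi. apply in_seq in Hi. apply Hrho. lia. }
    split; rewrite sat_BigAnd.
    + intros p Hp. apply in_map_iff in Hp. destruct Hp as [i [<- Hi]]. apply in_seq in Hi.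
      apply sat_Cent. lia. apply Hzc. rewrite <- Hmap. apply in_map. apply in_seq. lia.
    + intros p Hp. apply in_map_iff in Hp. destruct Hp as [eps [<- Heps]]. apply filter_In in Heps.
      destruct Heps as [Heps Hex]. unfold bodyF. simpl. intros y Hy HD.
      apply sat_Cent in Hy; [|lia]. unfold upd in Hy. rewrite Nat.eqb_refl in Hy.
      apply (HPhi eps Heps Hex y Hy).
      apply blists_In in Heps. rewrite sat_Dform in HD.
      * simpl in HD. rewrite teval_prodT in HD. unfold upd at 2 3 in HD. rewrite Nat.eqb_refl in HD.
        replace (map (upd K rho s y) (seq 0 (length eps))) with z in HD; auto.
        rewrite <- Hmap, Heps. apply map_ext_in. intros i Hi. apply in_seq in Hi. unfold upd.
        destruct (Nat.eqb_spec i s); auto; lia.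
      * intros x Hx. simpl in Hx. destruct Hx as [[Hx|Hx]|Hx]; try lia. apply tvar_prodT in Hx. lia.
Qed.

Lemma iso_from_bases (G H : group) (G0 : gset G) (H0 : gset H) eG eH :
  subgroup G G0 -> subgroup H H0 ->
  is_basis G G0 eG -> is_basis H H0 eH -> length eG = length eH -> iso_sub G H G0 H0.
Proof.
  intros HG0 HH0 HbG HbH Hlen.
  pose proof HbG as [HeG1 [HeG2 HeG3]]. pose proof HbH as [HeH1 [HeH2 HeH3]].
  assert (CG : allc G eG) by (intros y Hy; apply HeG1; auto).
  assert (CH : allc H eH) by (intros y Hy; apply HeH1; auto).
  exists (fun x => lin H (combine eH (coord G eG x))). split; [|split; [|split]].
  - intros x Hx. apply subgroup_lin; auto. intros; apply HeH1; auto.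
  - intros x y Hx Hy.
    destruct (coord_spec G G0 eG x HbG Hx) as [Lx Ex].
    destruct (coord_spec G G0 eG y HbG Hy) as [Ly Ey].
    destruct (coord_spec G G0 eG (gmul x y) HbG (subgroup_mul _ _ _ _ HG0 Hx Hy)) as [Lxy Exy].
    assert (E : coord G eG (gmul x y) = vadd (coord G eG x) (coord G eG y)).
    { apply (indep_unique G eG); auto. rewrite vadd_length; lia.
      rewrite <- Exy, <- lin_add; auto. rewrite <- Ex, <- Ey. auto. }
    rewrite E, lin_add; auto; lia.
  - intros x y Hx Hy Exy.
    destruct (coord_spec G G0 eG x HbG Hx) as [Lx Ex].
    destruct (coord_spec G G0 eG y HbG Hy) as [Ly Ey].
    apply (indep_unique H eH) in Exy; auto; try lia.
    rewrite Ex, Ey, Exy. auto.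
  - intros y Hy. destruct (HeH3 y Hy) as [c [Hc ->]].
    set (x := lin G (combine eG c)).
    assert (Hx : G0 x) by (apply subgroup_lin; auto; intros; apply HeG1; auto).
    exists x. split; auto.
    destruct (coord_spec G G0 eG x HbG Hx) as [Lx Ex].
    assert (Hcx : coord G eG x = c). { apply (indep_unique G eG); auto; try lia; rewrite <- Ex; auto. }
    rewrite Hcx. auto.
Qed.

Theorem mainTheorem6 (G H : group) (G0 : gset G) (H0 : gset H) :
  fin_gen G -> nilpotent G -> fin_gen H -> nilpotent H ->
  elem_equiv G H ->
  addition G G0 -> addition H H0 ->
  iso_sub G H G0 H0.
Proof.
  intros HfgG HnilG HfgH HnilH Heq HaddG HaddH.
  destruct (basis_K0 G G0 HfgG HnilG HaddG) as [eG HbG].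
  destruct (basis_K0 H H0 HfgH HnilH HaddH) as [eH HbH].
  destruct (good_bounds G HfgG HnilG) as [wG [EG [HEG HbdG]]].
  destruct (good_bounds H HfgH HnilH) as [wH [EH [HEH HbdH]]].
  apply (iso_from_bases G H G0 H0 eG eH); try apply HaddG; try apply HaddH; auto.
  apply Nat.le_antisymm.
  - apply (upper H H0 HaddH eH (length eG) wH EH HbH HbdH).
    apply (sat_Phi H (fun _ => gone)).
    apply (Heq _ (Phi_sentence _ _ _)).
    apply (sat_Phi G (fun _ => gone)).
    apply (lower G G0 HaddG eG HbG wH EH HEH).
  - apply (upper G G0 HaddG eG (length eH) wG EG HbG HbdG).
    apply (sat_Phi G (fun _ => gone)).
    apply (Heq _ (Phi_sentence _ _ _)).
    apply (sat_Phi H (fun _ => gone)).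
    apply (lower H H0 HaddH eH HbH wG EG HEG).
Qed.
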